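(* Let $\mu_0$ and $\mu_n$ ($n\in\mathbb N$) be discrete ensembles of states in $\mathfrak S(\mathcal H)$, $\mu_n=\{p^n_i,\rho^n_i\}$. The following are equivalent: (a) $D_*(\mu_n,\mu_0)\to0$; (b) $D_K(\mu_n,\mu_0)\to0$; (c) $\lim_{n\to\infty}\sum_ip^n_if(\rho^n_i)=\sum_ip^0_if(\rho^0_i)$ for every bounded continuous function $f$ on $\mathfrak S(\mathcal H)$ (with the trace-norm topology). In other words, both $D_*$ and $D_K$ generate the weak convergence topology on the set of discrete ensembles regarded as probability measures $\sum_ip_i\delta_{\rho_i}$.
   Context: $\mathcal H$ is a separable Hilbert space, $\mathfrak S(\mathcal H)$ the set of density operators, $\|\cdot\|_1$ the trace norm. A discrete ensemble $\{p_i,\rho_i\}$ is a finite or countable family of states $\rho_i$ with a probability distribution $\{p_i\}$; it corresponds to the probability measure $\sum_ip_i\delta_{\rho_i}$ on $\mathfrak S(\mathcal H)$ ($\delta_\rho$ the Dirac measure). $D_0(\{p_i,\rho_i\},\{q_i,\sigma_i\})=\frac12\sum_i\|p_i\rho_i-q_i\sigma_i\|_1$ for ensembles indexed by the same index set (a shorter ensemble is padded with zero-probability entries). For an ensemble $\mu$, $\mathcal E(\mu)$ is the set of all finite or countable ensembles $\{p'_j,\rho'_j\}$ with $\sum_jp'_j\delta_{\rho'_j}=\sum_ip_i\delta_{\rho_i}$, and $D_*(\mu,\nu)=\inf_{\mu'\in\mathcal E(\mu),\nu'\in\mathcal E(\nu)}D_0(\mu',\nu')$. Kantorovich distance: $D_K(\{p_i,\rho_i\},\{q_j,\sigma_j\})=\frac12\inf_{\{P_{ij}\}}\sum_{i,j}P_{ij}\|\rho_i-\sigma_j\|_1$,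 infimum over joint probability distributions with $\sum_jP_{ij}=p_i$, $\sum_iP_{ij}=q_j$. *)

(* Defs.v *)
From Stdlib Require Import Reals Lra ClassicalEpsilon.
Open Scope R_scope.

(* least upper bound of a set of reals (0 if it does not exist) *)
Definition Rsup (E : R -> Prop) : R :=
  match excluded_middle_informative (exists m, is_lub E m) with
  | left H => proj1_sig (constructive_indefinite_description _ H)
  | right _ => 0
  end.

Definition Rinf (E : R -> Prop) : R := - Rsup (fun x => E (- x)).

(* sum of a convergent real series (0 if it does not converge) *)
Definition series (s : nat -> R) : R :=
  match excluded_middle_informative (exists l, infinite_sum s l) with
  | left H => proj1_sig (constructive_indefinite_description _ H)
  | right _ => 0
  end.

Fixpoint fsum (n : nat) (f : nat -> R) : R :=
  match n with O => 0 | S n' => fsum n' f + f n' end.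

Record C := mkC { re : R ; im : R }.
Definition C0 : C := mkC 0 0.
Definition C1 : C := mkC 1 0.
Definition Cadd (a b : C) : C := mkC (re a + re b) (im a + im b).
Definition Cmul (a b : C) : C :=
  mkC (re a * re b - im a * im b) (re a * im b + im a * re b).
Definition Cconj (a : C) : C := mkC (re a) (- im a).
Definition Cscale (r : R) (a : C) : C := mkC (r * re a) (r * im a).
Definition Csub (a b : C) : C := mkC (re a - re b) (im a - im b).
Definition Cmod (a : C) : R := sqrt (re a ^ 2 + im a ^ 2).
Fixpoint Csum (n : nat) (f : nat -> C) : C :=
  match n with O => C0 | S n' => Cadd (Csum n' f) (f n') end.

(** A separable Hilbert space H is (up to unitary equivalence) l^2(I) with
    I = {0,...,n-1} ([dim = Some n]) or I = N ([dim = None]).  We realise it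
    inside l^2(N) over the orthonormal basis (|j>)_j, and represent an operator
    by its infinite matrix  A j k = <j|A|k>. *)
Definition Mat := nat -> nat -> C.

Definition in_dim (dim : option nat) (j : nat) : Prop :=
  match dim with Some n => (j < n)%nat | None => True end.

Definition Mscale (r : R) (A : Mat) : Mat := fun j k => Cscale r (A j k).
Definition Msub (A B : Mat) : Mat := fun j k => Csub (A j k) (B j k).

(* vectors are v : nat -> C; we only use finitely supported ones, with the
   support contained in {0,...,N-1} *)
Definition inner (N : nat) (u v : nat -> C) : C :=
  Csum N (fun j => Cmul (Cconj (u j)) (v j)).
Definition quad (N : nat) (v : nat -> C) (A : Mat) : C :=
  Csum N (fun j => Csum N (fun k => Cmul (Cmul (Cconj (v j)) (A j k)) (v k))).

Definition is_state (dim : option nat) (rho : Mat) : Prop :=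
  (forall j k, rho k j = Cconj (rho j k)) /\
  (forall (N : nat) (v : nat -> C), 0 <= re (quad N v rho)) /\
  (forall j k, ~ in_dim dim j -> rho j k = C0 /\ rho k j = C0) /\
  infinite_sum (fun j => re (rho j j)) 1.

Definition orthonormal (N m : nat) (e : nat -> nat -> C) : Prop :=
  forall k l, (k < m)%nat -> (l < m)%nat ->
    inner N (e k) (e l) = (if Nat.eqb k l then C1 else C0).

(* Trace norm of a self-adjoint trace-class operator A:
   ||A||_1 = sup over orthonormal families (e_k) of sum_k |<e_k|A|e_k>|
   (attained on an eigenbasis; finitely supported families are dense). *)
Definition tnorm (A : Mat) : R :=
  Rsup (fun s => exists N m e, orthonormal N m e /\
                   s = fsum m (fun k => Cmod (quad N (e k) A))).

(** * Discrete ensembles {p_i, rho_i}, indexed by nat (finite ensembles are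
    padded with zero-probability entries). *)
Definition is_ensemble (dim : option nat) (p : nat -> R) (rho : nat -> Mat) : Prop :=
  (forall i, 0 <= p i) /\ infinite_sum p 1 /\ (forall i, is_state dim (rho i)).

(* the probability measure sum_i p_i delta_{rho_i}, evaluated on a set S *)
Definition ens_measure (p : nat -> R) (rho : nat -> Mat) (S : Mat -> Prop) : R :=
  series (fun i => if excluded_middle_informative (S (rho i)) then p i else 0).

Definition same_measure (p : nat -> R) (rho : nat -> Mat)
                        (p' : nat -> R) (rho' : nat -> Mat) : Prop :=
  forall S : Mat -> Prop, ens_measure p rho S = ens_measure p' rho' S.

Definition D0 (p : nat -> R) (rho : nat -> Mat) (q : nat -> R) (sigma : nat -> Mat) : R :=
  / 2 * series (fun i => tnorm (Msub (Mscale (p i) (rho i)) (Mscale (q i) (sigma i)))).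

Definition Dstar (dim : option nat) (p : nat -> R) (rho : nat -> Mat)
                 (q : nat -> R) (sigma : nat -> Mat) : R :=
  Rinf (fun x => exists p' rho' q' sigma',
          is_ensemble dim p' rho' /\ same_measure p rho p' rho' /\
          is_ensemble dim q' sigma' /\ same_measure q sigma q' sigma' /\
          x = D0 p' rho' q' sigma').

Definition DK (p : nat -> R) (rho : nat -> Mat) (q : nat -> R) (sigma : nat -> Mat) : R :=
  Rinf (fun x => exists P : nat -> nat -> R,
          (forall i j, 0 <= P i j) /\
          (forall i, infinite_sum (fun j => P i j) (p i)) /\
          (forall j, infinite_sum (fun i => P i j) (q j)) /\
          x = / 2 * series (fun i => series (fun j =>
                       P i j * tnorm (Msub (rho i) (sigma j))))).

Definition bounded_on_states (dim : option nat) (f : Mat -> R) : Prop :=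
  exists M, forall rho, is_state dim rho -> Rabs (f rho) <= M.

Definition continuous_on_states (dim : option nat) (f : Mat -> R) : Prop :=
  forall rho, is_state dim rho -> forall eps, 0 < eps -> exists delta, 0 < delta /\
    forall sigma, is_state dim sigma -> tnorm (Msub rho sigma) < delta ->
      Rabs (f rho - f sigma) < eps.

Definition weak_conv (dim : option nat) (p : nat -> nat -> R) (rho : nat -> nat -> Mat)
                     (p0 : nat -> R) (rho0 : nat -> Mat) : Prop :=
  forall f : Mat -> R, bounded_on_states dim f -> continuous_on_states dim f ->
    Un_cv (fun n => series (fun i => p n i * f (rho n i)))
          (series (fun i => p0 i * f (rho0 i))).

(* Main.v *)
Require Import Defs.
From Stdlib Require Import Reals.
From Stdlib Require Import Lra Lia ClassicalEpsilon Classical Arith Ring FunctionalExtensionality PropExtensionality.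
Import Defs.
Open Scope R_scope.

Lemma Rsup_lub (E : R -> Prop) :
  (exists x, E x) -> (exists M, forall x, E x -> x <= M) -> is_lub E (Rsup E).
Proof.
  intros Hne [M HM]. unfold Rsup.
  destruct (excluded_middle_informative _) as [H|H].
  - destruct (constructive_indefinite_description _ H) as [m Hm]; exact Hm.
  - exfalso; apply H. destruct (completeness E) as [m Hm].
    + exists M; intros x Hx; apply HM, Hx.
    + exact Hne.
    + exists m; exact Hm.
Qed.

Lemma Rsup_ub (E : R -> Prop) x :
  (exists M, forall x, E x -> x <= M) -> E x -> x <= Rsup E.
Proof. intros HB Hx. destruct (Rsup_lub E (ex_intro _ x Hx) HB) as [H1 _]. apply H1, Hx. Qed.

Lemma Rsup_le (E : R -> Prop) b :
  (exists x, E x) -> (forall x, E x -> x <= b) -> Rsup E <= b.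
Proof. intros Hne HB. destruct (Rsup_lub E Hne (ex_intro _ b HB)) as [_ H2]. apply H2. exact HB. Qed.

Lemma Rinf_lb (E : R -> Prop) x :
  (exists m, forall x, E x -> m <= x) -> E x -> Rinf E <= x.
Proof.
  intros [m Hm] Hx. unfold Rinf.
  assert (- x <= Rsup (fun y => E (- y))).
  { apply Rsup_ub. exists (- m). intros y Hy. specialize (Hm _ Hy). lra.
    rewrite Ropp_involutive. exact Hx. }
  lra.
Qed.

Lemma Rinf_ge (E : R -> Prop) b :
  (exists x, E x) -> (forall x, E x -> b <= x) -> b <= Rinf E.
Proof.
  intros [x Hx] HB. unfold Rinf.
  assert (Rsup (fun y => E (- y)) <= - b).
  { apply Rsup_le. exists (- x). rewrite Ropp_involutive. exact Hx.
    intros y Hy. specialize (HB _ Hy). lra. }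
  lra.
Qed.

Lemma Rinf_approx (E : R -> Prop) eps :
  (exists x, E x) -> (exists m, forall x, E x -> m <= x) -> 0 < eps ->
  exists x, E x /\ x < Rinf E + eps.
Proof.
  intros Hne Hb He.
  destruct (classic (exists x, E x /\ x < Rinf E + eps)) as [H|H]; [exact H|].
  exfalso.
  assert (Rinf E + eps <= Rinf E); [|lra].
  apply Rinf_ge; [exact Hne|]. intros x Hx.
  destruct (Rlt_le_dec x (Rinf E + eps)) as [Hl|Hl]; [|exact Hl].
  exfalso; apply H; exists x; auto.
Qed.

Lemma Rlt_half_pos e : 0 < e -> 0 < e / 2. Proof. intros; lra. Qed.

Lemma abs_le_iv a b : Rabs a <= b -> - b <= a <= b.
Proof. unfold Rabs; destruct (Rcase_abs a); intros; lra. Qed.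

Lemma series_of s l : infinite_sum s l -> series s = l.
Proof.
  intros H. unfold series. destruct (excluded_middle_informative _) as [H'|H'].
  - destruct (constructive_indefinite_description _ H') as [m Hm]; simpl.
    eapply uniqueness_sum; eauto.
  - exfalso; apply H'; exists l; exact H.
Qed.

Lemma series_spec s : (exists l, infinite_sum s l) -> infinite_sum s (series s).
Proof. intros [l H]. rewrite (series_of s l H). exact H. Qed.

Lemma isum_ge0 s l : (forall i, 0 <= s i) -> infinite_sum s l -> 0 <= l.
Proof.
  intros H1 H2. apply (@Rle_cv_lim (fun _ => 0) (sum_f_R0 s) 0 l).
  - intros n; apply cond_pos_sum; auto.
  - intros e He; exists 0%nat; intros; unfold R_dist; rewrite Rminus_diag, Rabs_R0; lra.
  - exact H2.
Qed.

Lemma series_ge0 s : (forall i, 0 <= s i) -> 0 <= series s.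
Proof.
  intros H. unfold series. destruct (excluded_middle_informative _) as [H'|H'].
  - destruct (constructive_indefinite_description _ H') as [m Hm]; simpl.
    eapply isum_ge0; eauto.
  - lra.
Qed.

Lemma isum_le a b la lb : (forall i, a i <= b i) -> infinite_sum a la -> infinite_sum b lb -> la <= lb.
Proof.
  intros H Ha Hb. apply (@Rle_cv_lim (sum_f_R0 a) (sum_f_R0 b)); auto.
  intros n; apply sum_growing; auto.
Qed.

Lemma isum_plus a b la lb : infinite_sum a la -> infinite_sum b lb ->
  infinite_sum (fun i => a i + b i) (la + lb).
Proof.
  intros Ha Hb. intros e He. destruct (CV_plus _ _ _ _ Ha Hb e He) as [N HN].
  exists N; intros n Hn. rewrite plus_sum. apply HN; auto.
Qed.

Lemma isum_scal a la c : infinite_sum a la -> infinite_sum (fun i => c * a i) (c * la).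
Proof.
  intros Ha. assert (Hc : Un_cv (fun _ => c) c).
  { intros e He; exists 0%nat; intros; unfold R_dist; rewrite Rminus_diag, Rabs_R0; lra. }
  intros e He. destruct (CV_mult _ _ _ _ Hc Ha e He) as [N HN].
  exists N; intros n Hn.
  replace (sum_f_R0 (fun i => c * a i) n) with (c * sum_f_R0 a n).
  apply HN; auto. rewrite scal_sum. apply sum_eq; intros; ring.
Qed.

Lemma isum_ext a b l : (forall i, a i = b i) -> infinite_sum a l -> infinite_sum b l.
Proof.
  intros H Ha e He. destruct (Ha e He) as [N HN]; exists N; intros n Hn.
  rewrite <- (sum_eq a b); auto.
Qed.

Lemma isum_minus a b la lb : infinite_sum a la -> infinite_sum b lb ->
  infinite_sum (fun i => a i - b i) (la - lb).
Proof.
  intros Ha Hb. apply (isum_scal _ _ (-1)) in Hb.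
  generalize (isum_plus _ _ _ _ Ha Hb). intros H.
  replace (la - lb) with (la + -1 * lb) by ring.
  eapply isum_ext; [|exact H]. intros; simpl; ring.
Qed.

Lemma isum_zero : infinite_sum (fun _ => 0) 0.
Proof.
  intros e He; exists 0%nat; intros n _. replace (sum_f_R0 (fun _ => 0) n) with 0.
  unfold R_dist; rewrite Rminus_diag, Rabs_R0; lra.
  induction n; simpl; [reflexivity|rewrite <- IHn; ring].
Qed.

Lemma summable_dom a b lb : (forall i, 0 <= a i <= b i) -> infinite_sum b lb ->
  exists la, infinite_sum a la.
Proof.
  intros H Hb. destruct (Rseries_CV_comp a b H (exist _ lb Hb)) as [l Hl].
  exists l; exact Hl.
Qed.

Lemma summable_absdom a b lb : (forall i, Rabs (a i) <= b i) -> infinite_sum b lb ->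
  exists la, infinite_sum a la.
Proof.
  intros H Hb.
  destruct (summable_dom (fun i => a i + b i) (fun i => 2 * b i) (2 * lb)) as [l Hl].
  - intros i; specialize (H i). apply abs_le_iv in H; lra.
  - apply isum_scal; auto.
  - exists (l - lb). eapply isum_ext; [|apply (isum_minus _ _ _ _ Hl Hb)].
    intros; simpl; ring.
Qed.

Lemma series_le a b : (forall i, a i <= b i) -> (exists l, infinite_sum a l) ->
  (exists l, infinite_sum b l) -> series a <= series b.
Proof.
  intros H Ha Hb. apply series_spec in Ha. apply series_spec in Hb.
  eapply isum_le; eauto.
Qed.

Lemma partial_le a l n : (forall i, 0 <= a i) -> infinite_sum a l -> sum_f_R0 a n <= l.
Proof. intros H1 H2. apply sum_incr; auto. Qed.

Lemma fsum_S_sum f n : fsum (S n) f = sum_f_R0 f n.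
Proof. induction n; simpl in *; [ring|]. rewrite <- IHn. simpl. ring. Qed.

Lemma fsum_ext n f g : (forall i, (i < n)%nat -> f i = g i) -> fsum n f = fsum n g.
Proof.
  induction n; intros H; simpl; [reflexivity|]. rewrite IHn, H; auto; lia.
Qed.

Lemma fsum_le n f g : (forall i, (i < n)%nat -> f i <= g i) -> fsum n f <= fsum n g.
Proof. induction n; intros H; simpl; [lra|]. assert (f n <= g n) by (apply H; lia).
  assert (fsum n f <= fsum n g) by (apply IHn; intros; apply H; lia). lra. Qed.

Lemma fsum_ge0 n f : (forall i, (i < n)%nat -> 0 <= f i) -> 0 <= fsum n f.
Proof. intros H. replace 0 with (fsum n (fun _ => 0)). apply fsum_le; auto.
  induction n; simpl; auto. rewrite IHn; [ring|]. intros; apply H; lia. Qed.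

Lemma fsum_plus n f g : fsum n (fun i => f i + g i) = fsum n f + fsum n g.
Proof. induction n; simpl; [ring|rewrite IHn; ring]. Qed.

Lemma fsum_scal n c f : fsum n (fun i => c * f i) = c * fsum n f.
Proof. induction n; simpl; [ring|rewrite IHn; ring]. Qed.

Lemma fsum_minus n f g : fsum n (fun i => f i - g i) = fsum n f - fsum n g.
Proof. induction n; simpl; [ring|rewrite IHn; ring]. Qed.

Lemma fsum_zero n : fsum n (fun _ => 0) = 0.
Proof. induction n; simpl; [ring|rewrite IHn; ring]. Qed.

Lemma fsum_abs n f : Rabs (fsum n f) <= fsum n (fun i => Rabs (f i)).
Proof. induction n; simpl. rewrite Rabs_R0; lra.
  eapply Rle_trans; [apply Rabs_triang|lra]. Qed.

Lemma fsum_mono n m f : (n <= m)%nat -> (forall i, 0 <= f i) -> fsum n f <= fsum m f.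
Proof. intros H Hf. induction H; [lra|simpl; specialize (Hf m); lra]. Qed.

Lemma partial_le' a l n : (forall i, 0 <= a i) -> infinite_sum a l -> fsum n a <= l.
Proof. intros H1 H2. destruct n. simpl. eapply isum_ge0; eauto.
  rewrite fsum_S_sum. eapply partial_le; eauto. Qed.

Lemma isum_finite a K : (forall i, (K <= i)%nat -> a i = 0) -> infinite_sum a (fsum K a).
Proof.
  intros H e He. exists K. intros n Hn.
  replace (sum_f_R0 a n) with (fsum K a). unfold R_dist; rewrite Rminus_diag, Rabs_R0; lra.
  rewrite <- fsum_S_sum. assert (HK : (K <= S n)%nat) by lia. clear Hn.
  induction HK; [reflexivity|]. simpl. rewrite <- IHHK, H by lia. ring.
Qed.

Lemma isum_fsum K (a : nat -> nat -> R) (l : nat -> R) :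
  (forall c, (c < K)%nat -> infinite_sum (a c) (l c)) ->
  infinite_sum (fun i => fsum K (fun c => a c i)) (fsum K l).
Proof.
  induction K; intros H; simpl.
  - apply isum_zero.
  - apply isum_plus. apply IHK; intros; apply H; lia. apply H; lia.
Qed.

Lemma isum_tail a l eps : infinite_sum a l -> 0 < eps -> exists K, forall n, (K <= n)%nat ->
  Rabs (fsum n a - l) < eps.
Proof.
  intros H He. destruct (H eps He) as [N HN]. exists (S N). intros n Hn.
  destruct n; [lia|]. rewrite fsum_S_sum. apply HN; lia.
Qed.

Lemma fsum_isum a l : (forall eps, 0 < eps -> exists K, forall n, (K <= n)%nat ->
  Rabs (fsum n a - l) < eps) -> infinite_sum a l.
Proof.
  intros H e He. destruct (H e He) as [K HK]. exists K; intros n Hn.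
  rewrite <- fsum_S_sum. apply HK; lia.
Qed.

Definition ind (P : Prop) : R := if excluded_middle_informative P then 1 else 0.

Lemma ind_01 P : 0 <= ind P <= 1.
Proof. unfold ind; destruct (excluded_middle_informative P); lra. Qed.
Lemma ind_T (P : Prop) : P -> ind P = 1.
Proof. unfold ind; destruct (excluded_middle_informative P); tauto. Qed.
Lemma ind_F (P : Prop) : ~ P -> ind P = 0.
Proof. unfold ind; destruct (excluded_middle_informative P); tauto. Qed.

Lemma C_ext a b : re a = re b -> im a = im b -> a = b.
Proof. destruct a, b; simpl; intros; subst; reflexivity. Qed.

Definition Copp (a : C) : C := mkC (- re a) (- im a).

Lemma Cring_theory : ring_theory C0 C1 Cadd Cmul Csub Copp (@eq C).
Proof.
  constructor; intros; apply C_ext; unfold Cadd, Cmul, Csub, Copp, C0, C1; simpl; ring.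
Qed.
Add Ring Cring : Cring_theory.

Lemma Cscale_mul r z : Cscale r z = Cmul (mkC r 0) z.
Proof. apply C_ext; unfold Cscale, Cmul; simpl; ring. Qed.

Lemma Cconj_mul a b : Cconj (Cmul a b) = Cmul (Cconj a) (Cconj b).
Proof. apply C_ext; unfold Cconj, Cmul; simpl; ring. Qed.
Lemma Cconj_conj a : Cconj (Cconj a) = a.
Proof. apply C_ext; unfold Cconj; simpl; ring. Qed.
Lemma Cconj_add a b : Cconj (Cadd a b) = Cadd (Cconj a) (Cconj b).
Proof. apply C_ext; unfold Cconj, Cadd; simpl; ring. Qed.
Lemma Cconj_sub a b : Cconj (Csub a b) = Csub (Cconj a) (Cconj b).
Proof. apply C_ext; unfold Cconj, Csub; simpl; ring. Qed.
Lemma Cconj_C1 : Cconj C1 = C1.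
Proof. apply C_ext; unfold Cconj, C1; simpl; ring. Qed.
Lemma Cconj_C0 : Cconj C0 = C0.
Proof. apply C_ext; unfold Cconj, C0; simpl; ring. Qed.

Lemma Csum_ext n f g : (forall i, (i < n)%nat -> f i = g i) -> Csum n f = Csum n g.
Proof. induction n; intros H; simpl; [reflexivity|]. rewrite IHn, H; auto; lia. Qed.
Lemma Csum_add n f g : Csum n (fun i => Cadd (f i) (g i)) = Cadd (Csum n f) (Csum n g).
Proof. induction n; simpl. apply C_ext; unfold Cadd, C0; simpl; ring. rewrite IHn; ring. Qed.
Lemma Csum_sub n f g : Csum n (fun i => Csub (f i) (g i)) = Csub (Csum n f) (Csum n g).
Proof. induction n; simpl. apply C_ext; unfold Csub, C0; simpl; ring. rewrite IHn; ring. Qed.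
Lemma Csum_mul_l n c f : Cmul c (Csum n f) = Csum n (fun i => Cmul c (f i)).
Proof. induction n; simpl. ring. rewrite <- IHn; ring. Qed.
Lemma Csum_mul_r n c f : Cmul (Csum n f) c = Csum n (fun i => Cmul (f i) c).
Proof. induction n; simpl. ring. rewrite <- IHn; ring. Qed.
Lemma Csum_zero n : Csum n (fun _ => C0) = C0.
Proof. induction n; simpl; [reflexivity|rewrite IHn; ring]. Qed.
Lemma Csum_conj n f : Cconj (Csum n f) = Csum n (fun i => Cconj (f i)).
Proof. induction n; simpl. apply Cconj_C0. rewrite Cconj_add, IHn; reflexivity. Qed.
Lemma Csum_swap n m (F : nat -> nat -> C) :
  Csum n (fun j => Csum m (fun k => F j k)) = Csum m (fun k => Csum n (fun j => F j k)).
Proof.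
  induction n; simpl. rewrite Csum_zero; reflexivity.
  rewrite IHn, <- Csum_add. reflexivity.
Qed.
Lemma re_Csum n f : re (Csum n f) = fsum n (fun i => re (f i)).
Proof. induction n; simpl; [reflexivity|rewrite IHn; reflexivity]. Qed.
Lemma im_Csum n f : im (Csum n f) = fsum n (fun i => im (f i)).
Proof. induction n; simpl; [reflexivity|rewrite IHn; reflexivity]. Qed.

Definition delta (j a : nat) : C := if Nat.eqb j a then C1 else C0.

Lemma delta_sym j a : delta j a = delta a j.
Proof. unfold delta; rewrite Nat.eqb_sym; reflexivity. Qed.
Lemma Cconj_delta j a : Cconj (delta j a) = delta j a.
Proof. unfold delta; destruct (Nat.eqb j a); [apply Cconj_C1|apply Cconj_C0]. Qed.

Lemma Csum_delta N a g : (a < N)%nat -> Csum N (fun j => Cmul (delta j a) (g j)) = g a.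
Proof.
  induction N; intros H; [lia|]. simpl.
  destruct (Nat.eq_dec a N) as [->|Hne].
  - rewrite (Csum_ext _ _ (fun _ => C0)). rewrite Csum_zero. unfold delta.
    rewrite Nat.eqb_refl. ring.
    intros i Hi. unfold delta. destruct (Nat.eqb_spec i N); [lia|ring].
  - rewrite IHN by lia. unfold delta. destruct (Nat.eqb_spec N a); [lia|ring].
Qed.

Lemma quad_lin N v a b A B :
  quad N v (fun j k => Csub (Cmul a (A j k)) (Cmul b (B j k))) =
  Csub (Cmul a (quad N v A)) (Cmul b (quad N v B)).
Proof.
  unfold quad. rewrite !Csum_mul_l, <- Csum_sub. apply Csum_ext; intros j _.
  rewrite !Csum_mul_l, <- Csum_sub. apply Csum_ext; intros k _. ring.
Qed.

Lemma quad_conj N v A : (forall j k, A k j = Cconj (A j k)) ->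
  Cconj (quad N v A) = quad N v A.
Proof.
  intros H. unfold quad. rewrite Csum_conj.
  rewrite (Csum_ext _ _ (fun j => Csum N (fun k => Cmul (Cmul (Cconj (v k)) (A k j)) (v j)))).
  apply Csum_swap.
  intros j _. rewrite Csum_conj. apply Csum_ext; intros k _.
  rewrite !Cconj_mul, Cconj_conj, <- H. ring.
Qed.

Lemma quad_im N v A : (forall j k, A k j = Cconj (A j k)) -> im (quad N v A) = 0.
Proof.
  intros H. generalize (quad_conj N v A H). intros E.
  assert (im (Cconj (quad N v A)) = im (quad N v A)) by (rewrite E; reflexivity).
  unfold Cconj in H0; simpl in H0. lra.
Qed.

Definition std (k : nat) : nat -> C := fun j => delta k j.

Lemma quad_std N k A : (k < N)%nat -> quad N (std k) A = A k k.
Proof.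
  intros Hk. unfold quad, std.
  rewrite (Csum_ext _ _ (fun j => Cmul (delta j k) (A j k))).
  apply (Csum_delta N k (fun j => A j k)); auto.
  intros j _. rewrite (Csum_ext _ _ (fun l => Cmul (delta l k) (Cmul (Cconj (delta k j)) (A j l)))).
  rewrite Csum_delta by auto. rewrite Cconj_delta, delta_sym. ring.
  intros l _. rewrite (delta_sym k l). ring.
Qed.

Lemma std_orthonormal N : orthonormal N N std.
Proof.
  intros k l Hk Hl. unfold inner, std.
  rewrite (Csum_ext _ _ (fun j => Cmul (delta j k) (delta l j))).
  rewrite Csum_delta by auto. unfold delta. rewrite Nat.eqb_sym. reflexivity.
  intros j _. rewrite Cconj_delta, delta_sym. reflexivity.
Qed.

Section Trace.
Variables (N m : nat) (e : nat -> nat -> C) (A : Mat).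
Hypothesis Hon : orthonormal N m e.

Definition Qm (a b : nat) : C := Csum m (fun k => Cmul (e k a) (Cconj (e k b))).
Definition fv (j : nat) : nat -> C := fun a => Csub (delta j a) (Qm a j).

Lemma Qm_conj a b : Cconj (Qm a b) = Qm b a.
Proof. unfold Qm. rewrite Csum_conj. apply Csum_ext; intros. rewrite Cconj_mul, Cconj_conj; ring. Qed.

Lemma QQ a b : Csum N (fun j => Cmul (Qm b j) (Qm j a)) = Qm b a.
Proof.
  unfold Qm.
  rewrite (Csum_ext _ _ (fun j => Csum m (fun k => Csum m (fun l =>
     Cmul (Cmul (e k b) (Cconj (e l a))) (Cmul (Cconj (e k j)) (e l j)))))).
  2:{ intros j _. rewrite Csum_mul_r. apply Csum_ext; intros k _.
      rewrite Csum_mul_l. apply Csum_ext; intros l _. ring. }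
  rewrite Csum_swap. apply Csum_ext; intros k Hk.
  rewrite Csum_swap.
  rewrite (Csum_ext _ _ (fun l => Cmul (delta l k) (Cmul (e k b) (Cconj (e l a))))).
  rewrite Csum_delta by auto. reflexivity.
  intros l Hl. rewrite <- Csum_mul_l. fold (inner N (e k) (e l)).
  rewrite Hon by auto. unfold delta. rewrite Nat.eqb_sym.
  destruct (Nat.eqb l k); ring.
Qed.

Lemma fv_gram a b : (a < N)%nat -> (b < N)%nat ->
  Csum N (fun j => Cmul (Cconj (fv j a)) (fv j b)) = Csub (delta a b) (Qm b a).
Proof.
  intros Ha Hb. unfold fv.
  rewrite (Csum_ext _ _ (fun j => Csub (Csub (Cmul (delta j a) (delta j b))
     (Cmul (delta j a) (Qm b j))) (Csub (Cmul (delta j b) (Qm j a)) (Cmul (Qm b j) (Qm j a))))).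
  2:{ intros j _. rewrite Cconj_sub, Cconj_delta, Qm_conj. ring. }
  rewrite !Csum_sub, !Csum_delta by auto. rewrite QQ. rewrite delta_sym. ring.
Qed.

Lemma trace_identity :
  Csum N (fun j => quad N (fv j) A) =
  Csub (Csum N (fun a => A a a)) (Csum m (fun k => quad N (e k) A)).
Proof.
  unfold quad.
  rewrite Csum_swap.
  rewrite (Csum_ext _ _ (fun a => Csum N (fun b => Cmul (A a b) (Csub (delta a b) (Qm b a))))).
  2:{ intros a Ha. rewrite Csum_swap. apply Csum_ext; intros b Hb.
      rewrite <- fv_gram by auto. rewrite Csum_mul_l. apply Csum_ext; intros; ring. }
  rewrite (Csum_ext m _ (fun k => Csum N (fun a => Csum N (fun b =>
     Cmul (A a b) (Cmul (e k b) (Cconj (e k a))))))).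
  2:{ intros k _. apply Csum_ext; intros a _. apply Csum_ext; intros b _. ring. }
  rewrite (Csum_swap m N).
  rewrite <- Csum_sub. apply Csum_ext; intros a Ha.
  rewrite (Csum_swap m N).
  rewrite (Csum_ext _ _ (fun b => Csub (Cmul (delta b a) (A a b)) (Cmul (A a b) (Qm b a)))).
  2:{ intros b _. rewrite delta_sym. ring. }
  rewrite Csum_sub, Csum_delta by auto. f_equal.
  apply Csum_ext; intros b _. unfold Qm. rewrite Csum_mul_l. reflexivity.
Qed.

End Trace.

Lemma trace_ineq N m e A : orthonormal N m e ->
  (forall (N : nat) (v : nat -> C), 0 <= re (quad N v A)) ->
  fsum m (fun k => re (quad N (e k) A)) <= fsum N (fun a => re (A a a)).
Proof.
  intros Hon Hpsd. generalize (trace_identity N m e A Hon). intros E.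
  assert (re (Csum N (fun j => quad N (fv m e j) A)) >= 0).
  { rewrite re_Csum. apply Rle_ge, fsum_ge0. intros; apply Hpsd. }
  rewrite E in H. unfold Csub in H; simpl in H. rewrite !re_Csum in H. lra.
Qed.

Definition qr N v (A : Mat) := re (quad N v A).

Definition TS p rho q sigma : R -> Prop := fun s => exists N m e, orthonormal N m e /\
  s = fsum m (fun k => Rabs (p * qr N (e k) rho - q * qr N (e k) sigma)).

Lemma quad_ext N v A B : (forall j k, A j k = B j k) -> quad N v A = quad N v B.
Proof. intros H. unfold quad. apply Csum_ext; intros. apply Csum_ext; intros. rewrite H; reflexivity. Qed.

Lemma Rsup_ext (E F : R -> Prop) : (forall x, E x <-> F x) -> Rsup E = Rsup F.
Proof. intros H. f_equal. apply functional_extensionality; intros x.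
  apply propositional_extensionality; apply H. Qed.

Lemma Cmod_real z : im z = 0 -> Cmod z = Rabs (re z).
Proof. intros H. unfold Cmod. rewrite H. replace (re z ^ 2 + 0 ^ 2) with (Rsqr (re z)).
  apply sqrt_Rsqr_abs. unfold Rsqr; ring. Qed.

Definition herm (A : Mat) := forall j k, A k j = Cconj (A j k).

Lemma quad_comb N v p q A B : herm A -> herm B ->
  Cmod (quad N v (fun j k => Csub (Cscale p (A j k)) (Cscale q (B j k)))) =
  Rabs (p * qr N v A - q * qr N v B).
Proof.
  intros HA HB.
  rewrite (quad_ext N v _ (fun j k => Csub (Cmul (mkC p 0) (A j k)) (Cmul (mkC q 0) (B j k)))).
  2:{ intros; rewrite !Cscale_mul; reflexivity. }
  rewrite quad_lin. rewrite Cmod_real.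
  - unfold Csub, Cmul, qr; simpl. rewrite (quad_im N v A HA), (quad_im N v B HB). f_equal; ring.
  - unfold Csub, Cmul; simpl. rewrite (quad_im N v A HA), (quad_im N v B HB). ring.
Qed.

Lemma tnorm_TS p q rho sigma : herm rho -> herm sigma ->
  tnorm (Msub (Mscale p rho) (Mscale q sigma)) = Rsup (TS p rho q sigma).
Proof.
  intros H1 H2. unfold tnorm. apply Rsup_ext. intros s. unfold TS.
  split; intros (N & m & e & Ho & Hs); exists N, m, e; split; auto; rewrite Hs;
  apply fsum_ext; intros k _; unfold Msub, Mscale; rewrite quad_comb; auto.
Qed.

Lemma tnorm_TS1 rho sigma : herm rho -> herm sigma ->
  tnorm (Msub rho sigma) = Rsup (TS 1 rho 1 sigma).
Proof.
  intros H1 H2. rewrite <- tnorm_TS; auto. unfold tnorm. apply Rsup_ext. intros s.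
  split; intros (N & m & e & Ho & Hs); exists N, m, e; split; auto; rewrite Hs;
  apply fsum_ext; intros k _; f_equal; apply quad_ext; intros; unfold Msub, Mscale;
  apply C_ext; unfold Csub, Cscale; simpl; ring.
Qed.

Section States.
Variable dim : option nat.

Lemma st_herm rho : is_state dim rho -> herm rho.
Proof. intros (H & _); exact H. Qed.

Lemma st_diag_ge0 rho j : is_state dim rho -> 0 <= re (rho j j).
Proof.
  intros (_ & Hp & _). generalize (Hp (S j) (std j)). rewrite quad_std by lia. auto.
Qed.

Lemma st_qr_ge0 rho N v : is_state dim rho -> 0 <= qr N v rho.
Proof. intros (_ & Hp & _). apply Hp. Qed.

Lemma st_trace_le rho N : is_state dim rho -> fsum N (fun a => re (rho a a)) <= 1.
Proof.
  intros Hs. apply partial_le'. intros; apply (st_diag_ge0 _ _ Hs). destruct Hs as (_&_&_&H); exact H.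
Qed.

Lemma st_fam_le rho N m e : is_state dim rho -> orthonormal N m e ->
  fsum m (fun k => qr N (e k) rho) <= 1.
Proof.
  intros Hs Ho. eapply Rle_trans; [apply trace_ineq; eauto|]. destruct Hs as (_&H&_); exact H.
  apply st_trace_le; auto.
Qed.

Lemma TS_bound p rho q sigma s : is_state dim rho -> is_state dim sigma ->
  TS p rho q sigma s -> 0 <= s <= Rabs p + Rabs q.
Proof.
  intros H1 H2 (N & m & e & Ho & ->). split.
  - apply fsum_ge0; intros; apply Rabs_pos.
  - eapply Rle_trans.
    + apply (fsum_le m _ (fun k => Rabs p * qr N (e k) rho + Rabs q * qr N (e k) sigma)).
      intros k _. eapply Rle_trans; [apply Rabs_triang|]. rewrite Rabs_Ropp, !Rabs_mult.
      rewrite (Rabs_right (qr N (e k) rho)), (Rabs_right (qr N (e k) sigma)).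
      lra. apply Rle_ge, (st_qr_ge0 _ _ _ H2). apply Rle_ge, (st_qr_ge0 _ _ _ H1).
    + rewrite fsum_plus, !fsum_scal.
      generalize (st_fam_le _ _ _ _ H1 Ho) (st_fam_le _ _ _ _ H2 Ho) (Rabs_pos p) (Rabs_pos q).
      intros. nra.
Qed.

Lemma orth0 : orthonormal 0 0 (fun _ _ => C0).
Proof. intros k l Hk; lia. Qed.

Lemma TS_ne p rho q sigma : exists s, TS p rho q sigma s.
Proof. exists 0. exists 0%nat, 0%nat, (fun _ _ => C0). split; [apply orth0|reflexivity]. Qed.

Lemma TS_ub p rho q sigma : is_state dim rho -> is_state dim sigma ->
  exists M, forall s, TS p rho q sigma s -> s <= M.
Proof. intros. exists (Rabs p + Rabs q). intros s Hs. apply (TS_bound _ _ _ _ _ H H0 Hs). Qed.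

Lemma absP P a b : 0 <= P -> Rabs (P * a - P * b) = P * Rabs (1 * a - 1 * b).
Proof. intros. replace (P * a - P * b) with (P * (1 * a - 1 * b)) by ring.
  rewrite Rabs_mult, Rabs_right; lra. Qed.

Definition T p rho q sigma := Rsup (TS p rho q sigma).

Lemma T_ge s p rho q sigma : is_state dim rho -> is_state dim sigma ->
  TS p rho q sigma s -> s <= T p rho q sigma.
Proof. intros. apply Rsup_ub; auto. apply TS_ub; auto. Qed.

Lemma T_le b p rho q sigma : (forall s, TS p rho q sigma s -> s <= b) -> T p rho q sigma <= b.
Proof. intros. apply Rsup_le; auto. apply TS_ne. Qed.

Lemma T_bounds p rho q sigma : is_state dim rho -> is_state dim sigma ->
  0 <= T p rho q sigma <= Rabs p + Rabs q.
Proof.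
  intros. split.
  - destruct (TS_ne p rho q sigma) as [s Hs]. eapply Rle_trans; [|apply (T_ge s); eauto].
    apply (TS_bound _ _ _ _ _ H H0 Hs).
  - apply T_le. intros s Hs; apply (TS_bound _ _ _ _ _ H H0 Hs).
Qed.

Lemma T_hom P rho sigma : is_state dim rho -> is_state dim sigma -> 0 <= P ->
  T P rho P sigma = P * T 1 rho 1 sigma.
Proof.
  intros H1 H2 HP. apply Rle_antisym.
  - apply T_le. intros s (N & m & e & Ho & ->).
    rewrite (fsum_ext _ _ (fun k => P * Rabs (1 * qr N (e k) rho - 1 * qr N (e k) sigma))).
    rewrite fsum_scal. apply Rmult_le_compat_l; auto. apply T_ge; auto.
    exists N, m, e; split; auto.
    intros k _. apply absP; auto.
  - destruct (Req_dec P 0) as [->|HP0].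
    + rewrite Rmult_0_l. apply T_bounds; auto.
    + assert (T 1 rho 1 sigma <= T P rho P sigma / P).
      { apply T_le. intros s (N & m & e & Ho & ->).
        apply (Rmult_le_reg_l P); [lra|]. field_simplify; [|lra].
        rewrite <- fsum_scal. apply T_ge; auto. exists N, m, e; split; auto.
        apply fsum_ext; intros k _. symmetry; apply absP; auto. }
      apply (Rmult_le_compat_l P) in H; [|lra]. field_simplify in H; lra.
Qed.

Lemma T_tri rho sigma tau : is_state dim rho -> is_state dim sigma -> is_state dim tau ->
  T 1 rho 1 tau <= T 1 rho 1 sigma + T 1 sigma 1 tau.
Proof.
  intros H1 H2 H3. apply T_le. intros s (N & m & e & Ho & ->).
  eapply Rle_trans.
  - apply (fsum_le m _ (fun k => Rabs (1 * qr N (e k) rho - 1 * qr N (e k) sigma) +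
                                 Rabs (1 * qr N (e k) sigma - 1 * qr N (e k) tau))).
    intros k _. eapply Rle_trans; [|apply Rabs_triang]. right; f_equal; ring.
  - rewrite fsum_plus. apply Rplus_le_compat; apply T_ge; auto; exists N, m, e; split; auto.
Qed.

Lemma T_sym rho sigma : T 1 rho 1 sigma = T 1 sigma 1 rho.
Proof.
  unfold T. apply Rsup_ext. intros s.
  split; intros (N & m & e & Ho & ->); exists N, m, e; split; auto;
  apply fsum_ext; intros; rewrite Rabs_minus_sym; reflexivity.
Qed.

Lemma T_refl rho : is_state dim rho -> T 1 rho 1 rho = 0.
Proof.
  intros H. apply Rle_antisym; [|apply T_bounds; auto]. apply T_le.
  intros s (N & m & e & Ho & ->). rewrite (fsum_ext _ _ (fun _ => 0)). rewrite fsum_zero; lra.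
  intros; rewrite Rminus_diag, Rabs_R0; reflexivity.
Qed.

Lemma aux5 p q a b : 0 <= q -> 0 <= a ->
  q * Rabs (1 * b - 1 * a) <= Rabs (p * a - q * b) + Rabs (p - q) * a.
Proof.
  intros Hq Ha.
  replace (q * Rabs (1 * b - 1 * a)) with (Rabs (q * b - q * a)).
  2:{ replace (q * b - q * a) with (q * (1 * b - 1 * a)) by ring. rewrite Rabs_mult, (Rabs_right q); lra. }
  replace (Rabs (p - q) * a) with (Rabs ((p - q) * a)).
  2:{ rewrite Rabs_mult, (Rabs_right a); lra. }
  rewrite <- (Rabs_Ropp (p * a - q * b)).
  eapply Rle_trans; [|apply Rabs_triang]. right; f_equal; ring.
Qed.

Lemma T_5 p q rho sigma : is_state dim rho -> is_state dim sigma -> 0 <= p -> 0 <= q ->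
  q * T 1 sigma 1 rho <= T p rho q sigma + Rabs (p - q).
Proof.
  intros H1 H2 Hp Hq.
  assert (HT := T_bounds p rho q sigma H1 H2).
  destruct (Req_dec q 0) as [->|Hq0]. { rewrite Rmult_0_l. generalize (Rabs_pos (p - 0)); lra. }
  assert (T 1 sigma 1 rho <= (T p rho q sigma + Rabs (p - q)) / q); [|
    apply (Rmult_le_compat_l q) in H; [|lra]; field_simplify in H; lra].
  apply T_le. intros s (N & m & e & Ho & ->).
  apply (Rmult_le_reg_l q); [lra|]. field_simplify; [|lra].
  rewrite <- fsum_scal.
  eapply Rle_trans.
  - apply (fsum_le m _ (fun k => Rabs (p * qr N (e k) rho - q * qr N (e k) sigma) +
                                 Rabs (p - q) * qr N (e k) rho)).
    intros k _. apply aux5; auto. apply (st_qr_ge0 _ _ _ H1).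
  - rewrite fsum_plus, fsum_scal. apply Rplus_le_compat.
    + apply T_ge; auto. exists N, m, e; split; auto.
    + generalize (st_fam_le _ _ _ _ H1 Ho) (Rabs_pos (p - q)). intros; nra.
Qed.

Lemma T_2 p q rho sigma : is_state dim rho -> is_state dim sigma ->
  Rabs (p - q) <= T p rho q sigma.
Proof.
  intros H1 H2.
  apply Rnot_lt_le; intros Hlt.
  set (eps := (Rabs (p - q) - T p rho q sigma) / (Rabs p + Rabs q + 1)).
  assert (He : 0 < eps). { unfold eps. apply Rdiv_lt_0_compat. lra.
    generalize (Rabs_pos p) (Rabs_pos q); lra. }
  destruct H1 as (Hh1 & Hp1 & Hd1 & Htr1). destruct H2 as (Hh2 & Hp2 & Hd2 & Htr2).
  destruct (isum_tail _ _ _ Htr1 He) as [K1 HK1].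
  destruct (isum_tail _ _ _ Htr2 He) as [K2 HK2].
  set (n := (K1 + K2)%nat).
  assert (E1 := HK1 n ltac:(unfold n; lia)). assert (E2 := HK2 n ltac:(unfold n; lia)).
  assert (Hs : TS p rho q sigma (fsum n (fun k => Rabs (p * re (rho k k) - q * re (sigma k k))))).
  { exists n, n, std. split. apply std_orthonormal. apply fsum_ext; intros k Hk.
    unfold qr. rewrite !quad_std by auto. reflexivity. }
  apply T_ge in Hs; [|exact (conj Hh1 (conj Hp1 (conj Hd1 Htr1)))|exact (conj Hh2 (conj Hp2 (conj Hd2 Htr2)))].
  generalize (fsum_abs n (fun k => p * re (rho k k) - q * re (sigma k k))).
  rewrite fsum_minus, !fsum_scal. intros Habs.
  set (A := fsum n (fun k => re (rho k k))) in *. set (B := fsum n (fun k => re (sigma k k))) in *.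
  assert (Rabs (p - q) <= Rabs (p * A - q * B) + Rabs p * Rabs (1 - A) + Rabs q * Rabs (B - 1)).
  { rewrite <- !Rabs_mult. eapply Rle_trans; [|apply Rplus_le_compat_r; apply Rabs_triang].
    eapply Rle_trans; [|apply Rabs_triang]. right; f_equal; ring. }
  assert (Rabs p * Rabs (1 - A) <= Rabs p * eps) by (apply Rmult_le_compat_l; [apply Rabs_pos|rewrite Rabs_minus_sym; lra]).
  assert (Rabs q * Rabs (B - 1) <= Rabs q * eps) by (apply Rmult_le_compat_l; [apply Rabs_pos|lra]).
  assert (eps * (Rabs p + Rabs q + 1) = Rabs (p - q) - T p rho q sigma).
  { unfold eps. field. generalize (Rabs_pos p) (Rabs_pos q); lra. }
  nra.
Qed.

End States.

Definition pr (k : nat) : nat * nat :=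
  let n := Nat.sqrt k in let t := (k - n * n)%nat in
  if Nat.ltb t n then (t, n) else (n, (t - n)%nat).

Lemma fsum_add_range A B f : fsum (A + B) f = fsum A f + fsum B (fun t => f (A + t)%nat).
Proof. induction B; simpl. rewrite Nat.add_0_r; ring. rewrite Nat.add_succ_r; simpl. rewrite IHB; ring. Qed.

Lemma fsum_swap n m (a : nat -> nat -> R) :
  fsum n (fun i => fsum m (fun j => a i j)) = fsum m (fun j => fsum n (fun i => a i j)).
Proof.
  induction n; simpl. rewrite fsum_zero; reflexivity.
  rewrite IHn, <- fsum_plus. reflexivity.
Qed.

Definition Rect (a : nat -> nat -> R) n := fsum n (fun i => fsum n (fun j => a i j)).

Lemma shell (a : nat -> nat -> R) n :
  fsum (n * n) (fun k => a (fst (pr k)) (snd (pr k))) = Rect a n.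
Proof.
  induction n. reflexivity.
  replace (S n * S n)%nat with (n * n + (n + S n))%nat by lia.
  rewrite fsum_add_range, IHn, fsum_add_range. unfold Rect. simpl.
  rewrite fsum_plus.
  rewrite (fsum_ext n (fun t => a (fst (pr (n * n + t))) (snd (pr (n * n + t)))) (fun t => a t n)).
  2:{ intros t Ht. unfold pr. rewrite (Nat.sqrt_unique _ n) by lia.
      replace (n * n + t - n * n)%nat with t by lia.
      destruct (Nat.ltb_spec t n); [reflexivity|lia]. }
  rewrite (fsum_ext n (fun t => a (fst (pr (n * n + (n + t)))) (snd (pr (n * n + (n + t))))) (fun t => a n t)).
  2:{ intros t Ht. unfold pr. rewrite (Nat.sqrt_unique _ n) by lia.
      replace (n * n + (n + t) - n * n)%nat with (n + t)%nat by lia.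
      destruct (Nat.ltb_spec (n + t) n); [lia|]. simpl. f_equal; lia. }
  replace (pr (n * n + (n + n))) with (n, n).
  2:{ unfold pr. rewrite (Nat.sqrt_unique _ n) by lia.
      replace (n * n + (n + n) - n * n)%nat with (n + n)%nat by lia.
      destruct (Nat.ltb_spec (n + n) n); [lia|]. f_equal; lia. }
  simpl. ring.
Qed.

Section Tonelli.
Variable a : nat -> nat -> R.
Hypothesis a_ge0 : forall i j, 0 <= a i j.

Lemma Rect_mono n m : (n <= m)%nat -> Rect a n <= Rect a m.
Proof.
  intros H. unfold Rect. eapply Rle_trans.
  apply fsum_le. intros i _. apply (fsum_mono n m (fun j => a i j)); auto.
  apply fsum_mono; auto. intros; apply fsum_ge0; auto.
Qed.

Lemma tonelli_gen s : (forall n, Rect a n <= s) ->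
  (forall eps, 0 < eps -> exists n0, s - eps <= Rect a n0) ->
  infinite_sum (fun k => a (fst (pr k)) (snd (pr k))) s.
Proof.
  intros Hup Hlo. apply fsum_isum. intros eps He.
  destruct (Hlo (eps / 2)) as [n0 Hn0]; [lra|].
  exists (n0 * n0)%nat. intros K HK.
  assert (fsum (n0 * n0) (fun k => a (fst (pr k)) (snd (pr k))) <=
          fsum K (fun k => a (fst (pr k)) (snd (pr k)))) by (apply fsum_mono; auto).
  assert (fsum K (fun k => a (fst (pr k)) (snd (pr k))) <=
          fsum (K * K) (fun k => a (fst (pr k)) (snd (pr k)))) by (apply fsum_mono; auto; nia).
  rewrite shell in H, H0. specialize (Hup K).
  apply Rabs_def1; lra.
Qed.

Lemma rows_approx r : (forall i, infinite_sum (a i) (r i)) ->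
  forall I eps, 0 < eps -> exists J, fsum I r - eps <= fsum I (fun i => fsum J (a i)).
Proof.
  intros Hr I. induction I; intros eps He.
  - exists 0%nat. simpl; lra.
  - destruct (IHI (eps / 2)) as [J1 HJ1]; [lra|].
    destruct (isum_tail _ _ _ (Hr I) (Rlt_half_pos eps He)) as [J2 HJ2].
    exists (J1 + J2)%nat. simpl.
    assert (fsum I (fun i => fsum J1 (a i)) <= fsum I (fun i => fsum (J1 + J2) (a i))).
    { apply fsum_le; intros. apply fsum_mono; auto; lia. }
    specialize (HJ2 (J1 + J2)%nat ltac:(lia)). apply Rabs_def2 in HJ2. lra.
Qed.

Lemma rect_rows r s : (forall i, infinite_sum (a i) (r i)) -> infinite_sum r s ->
  (forall n, Rect a n <= s) /\ (forall eps, 0 < eps -> exists n0, s - eps <= Rect a n0).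
Proof.
  intros Hr Hs.
  assert (Hr0 : forall i, 0 <= r i). { intros i; eapply isum_ge0; [|apply Hr]. auto. }
  split.
  - intros n. unfold Rect. eapply Rle_trans; [|apply (partial_le' r s n); auto].
    apply fsum_le; intros i _. apply partial_le'; auto.
  - intros eps He. destruct (isum_tail _ _ _ Hs (Rlt_half_pos eps He)) as [I HI].
    destruct (rows_approx r Hr I (eps / 2)) as [J HJ]; [lra|].
    exists (I + J)%nat. specialize (HI I ltac:(lia)). apply Rabs_def2 in HI.
    assert (fsum I (fun i => fsum J (a i)) <= Rect a (I + J)).
    { unfold Rect. eapply Rle_trans.
      apply fsum_le; intros i _. apply (fsum_mono J (I + J) (a i)); auto; lia.
      apply fsum_mono; [lia|]. intros; apply fsum_ge0; auto. }
    lra.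
Qed.

Lemma tonelli_rows r s : (forall i, infinite_sum (a i) (r i)) -> infinite_sum r s ->
  infinite_sum (fun k => a (fst (pr k)) (snd (pr k))) s.
Proof. intros H1 H2. destruct (rect_rows r s H1 H2). apply tonelli_gen; auto. Qed.

End Tonelli.

Lemma Rect_transp a n : Rect (fun j i => a i j) n = Rect a n.
Proof. unfold Rect. rewrite fsum_swap. reflexivity. Qed.

Lemma tonelli_cols a c s : (forall i j, 0 <= a i j) ->
  (forall j, infinite_sum (fun i => a i j) (c j)) -> infinite_sum c s ->
  infinite_sum (fun k => a (fst (pr k)) (snd (pr k))) s.
Proof.
  intros H0 H1 H2.
  destruct (rect_rows (fun j i => a i j) (fun j i => H0 i j) c s H1 H2) as [Hu Hl].
  apply tonelli_gen; auto.
  - intros n; rewrite <- Rect_transp; auto.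
  - intros eps He; destruct (Hl eps He) as [n0 Hn0]; exists n0; rewrite <- Rect_transp; auto.
Qed.

Lemma isum_le_bound u l B : infinite_sum u l -> (forall n, fsum n u <= B) -> l <= B.
Proof.
  intros H HB. apply (@Rle_cv_lim (sum_f_R0 u) (fun _ => B)); auto.
  intros n; rewrite <- fsum_S_sum; auto.
  intros e He; exists 0%nat; intros; unfold R_dist; rewrite Rminus_diag, Rabs_R0; lra.
Qed.

Lemma bounded_summable u B : (forall i, 0 <= u i) -> (forall n, fsum n u <= B) ->
  exists l, infinite_sum u l.
Proof.
  intros H0 HB. destruct (growing_cv (sum_f_R0 u)) as [l Hl].
  - intros n; simpl; specialize (H0 (S n)); lra.
  - exists B. intros x [n ->]. rewrite <- fsum_S_sum; auto.
  - exists l; exact Hl.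
Qed.

Lemma fubini a r s : (forall i j, 0 <= a i j) ->
  (forall i, infinite_sum (a i) (r i)) -> infinite_sum r s ->
  exists c, (forall j, infinite_sum (fun i => a i j) (c j)) /\ infinite_sum c s.
Proof.
  intros H0 Hr Hs. destruct (rect_rows a H0 r s Hr Hs) as [Hu _].
  assert (Hc : forall j, exists cj, infinite_sum (fun i => a i j) cj).
  { intros j. apply (bounded_summable _ s); auto. intros n.
    eapply Rle_trans; [|apply (Hu (n + S j)%nat)]. unfold Rect.
    eapply Rle_trans; [|apply (fsum_mono n (n + S j)); [lia|intros; apply fsum_ge0; auto]].
    apply fsum_le; intros i _.
    eapply Rle_trans; [|apply (fsum_mono (S j) (n + S j)); auto; lia]. simpl.
    generalize (fsum_ge0 j (fun j0 => a i j0) ltac:(intros; auto)); lra. }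
  destruct (choice _ Hc) as [c Hcj].
  assert (Hc0 : forall j, 0 <= c j). { intros j. apply (isum_ge0 (fun i => a i j)); [intros; apply H0|apply Hcj]. }
  destruct (bounded_summable c s Hc0) as [s' Hs'].
  { intros J. generalize (isum_fsum J (fun j i => a i j) c (fun j _ => Hcj j)). intros HJ.
    apply (isum_le_bound _ _ _ HJ). intros n.
    eapply Rle_trans; [|apply (Hu (n + J)%nat)]. unfold Rect.
    eapply Rle_trans; [|apply (fsum_mono n (n + J)); [lia|intros; apply fsum_ge0; auto]].
    apply fsum_le; intros i _. apply (fsum_mono J (n + J) (fun c => a i c)); auto; lia. }
  exists c; split; auto.
  assert (s' = s); [|subst; auto].
  eapply uniqueness_sum. apply (tonelli_cols a c s' H0 Hcj Hs').
  apply (tonelli_rows a H0 r s Hr Hs).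
Qed.

Lemma tnorm_ge0 A : 0 <= tnorm A.
Proof.
  unfold tnorm, Rsup. destruct (excluded_middle_informative _) as [H|H]; [|lra].
  destruct (constructive_indefinite_description _ H) as [m Hm]; simpl. destruct Hm as [Hm _].
  apply Hm. exists 0%nat, 0%nat, (fun _ _ => C0). split; [apply orth0|reflexivity].
Qed.

Section Ens.
Variable dim : option nat.

Definition dd (x y : Mat) := tnorm (Msub x y).

Lemma dd_T x y : is_state dim x -> is_state dim y -> dd x y = T 1 x 1 y.
Proof. intros. unfold dd. rewrite tnorm_TS1; auto; apply (st_herm dim); auto. Qed.

Lemma g_T p q x y : is_state dim x -> is_state dim y ->
  tnorm (Msub (Mscale p x) (Mscale q y)) = T p x q y.
Proof. intros. rewrite tnorm_TS; auto; apply (st_herm dim); auto. Qed.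

Lemma dd_le2 x y : is_state dim x -> is_state dim y -> 0 <= dd x y <= 2.
Proof. intros. rewrite dd_T; auto. generalize (T_bounds dim 1 x 1 y H H0). rewrite Rabs_R1; lra. Qed.

Lemma dd_tri x y z : is_state dim x -> is_state dim y -> is_state dim z ->
  dd x z <= dd x y + dd y z.
Proof. intros. rewrite !dd_T; auto. apply (T_tri dim); auto. Qed.

Lemma dd_sym x y : is_state dim x -> is_state dim y -> dd x y = dd y x.
Proof. intros. rewrite !dd_T; auto. apply T_sym. Qed.

Lemma dd_refl x : is_state dim x -> dd x x = 0.
Proof. intros. rewrite dd_T; auto. apply (T_refl dim); auto. Qed.

Lemma g_hom P x y : is_state dim x -> is_state dim y -> 0 <= P ->
  tnorm (Msub (Mscale P x) (Mscale P y)) = P * dd x y.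
Proof. intros. rewrite g_T, dd_T; auto. apply (T_hom dim); auto. Qed.

Lemma g_2 p q x y : is_state dim x -> is_state dim y ->
  Rabs (p - q) <= tnorm (Msub (Mscale p x) (Mscale q y)).
Proof. intros. rewrite g_T; auto. apply (T_2 dim); auto. Qed.

Lemma g_5 p q x y : is_state dim x -> is_state dim y -> 0 <= p -> 0 <= q ->
  q * dd y x <= tnorm (Msub (Mscale p x) (Mscale q y)) + Rabs (p - q).
Proof. intros. rewrite g_T, dd_T; auto. apply (T_5 dim); auto. Qed.

Definition Kset (p : nat -> R) (rho : nat -> Mat) (q : nat -> R) (sigma : nat -> Mat) :=
  fun x => exists P : nat -> nat -> R,
          (forall i j, 0 <= P i j) /\
          (forall i, infinite_sum (fun j => P i j) (p i)) /\
          (forall j, infinite_sum (fun i => P i j) (q j)) /\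
          x = / 2 * series (fun i => series (fun j =>
                       P i j * tnorm (Msub (rho i) (sigma j)))).

Definition Sset p rho q sigma := fun x => exists p' rho' q' sigma',
          is_ensemble dim p' rho' /\ same_measure p rho p' rho' /\
          is_ensemble dim q' sigma' /\ same_measure q sigma q' sigma' /\
          x = D0 p' rho' q' sigma'.

Lemma D0_ge0 p rho q sigma : 0 <= D0 p rho q sigma.
Proof. unfold D0. apply Rmult_le_pos; [lra|]. apply series_ge0; intros; apply tnorm_ge0. Qed.

Lemma Sset_ne p rho q sigma : is_ensemble dim p rho -> is_ensemble dim q sigma ->
  exists x, Sset p rho q sigma x.
Proof. intros. exists (D0 p rho q sigma), p, rho, q, sigma. split; [auto|split; [intros S; reflexivity|split; [auto|split; [intros S; reflexivity|reflexivity]]]]. Qed.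

Lemma Sset_lb p rho q sigma : exists m, forall x, Sset p rho q sigma x -> m <= x.
Proof. exists 0. intros x (p' & rho' & q' & sigma' & _ & _ & _ & _ & ->). apply D0_ge0. Qed.

Lemma Dstar_eq p rho q sigma : Dstar dim p rho q sigma = Rinf (Sset p rho q sigma).
Proof. reflexivity. Qed.
Lemma DK_eq p rho q sigma : DK p rho q sigma = Rinf (Kset p rho q sigma).
Proof. reflexivity. Qed.

Lemma Dstar_ge0 p rho q sigma : is_ensemble dim p rho -> is_ensemble dim q sigma ->
  0 <= Dstar dim p rho q sigma.
Proof.
  intros. rewrite Dstar_eq. apply Rinf_ge. apply Sset_ne; auto.
  intros x (p' & rho' & q' & sigma' & _ & _ & _ & _ & ->). apply D0_ge0.
Qed.

Lemma Kset_ne p rho q sigma : is_ensemble dim p rho -> is_ensemble dim q sigma ->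
  exists x, Kset p rho q sigma x.
Proof.
  intros (Hp0 & Hp1 & _) (Hq0 & Hq1 & _).
  eexists. exists (fun i j => p i * q j). split; [|split; [|split]].
  - intros; apply Rmult_le_pos; auto.
  - intros i. assert (H := isum_scal q 1 (p i) Hq1). rewrite Rmult_1_r in H. exact H.
  - intros j. assert (H := isum_scal p 1 (q j) Hp1). rewrite Rmult_1_r in H.
    eapply isum_ext; [|exact H]. intros; simpl; ring.
  - reflexivity.
Qed.

Lemma ens_ge0 p rho : is_ensemble dim p rho -> forall i, 0 <= p i.
Proof. intros (H & _); auto. Qed.

Lemma DK_ge0 p rho q sigma : is_ensemble dim p rho -> is_ensemble dim q sigma ->
  0 <= DK p rho q sigma.
Proof.
  intros. rewrite DK_eq. apply Rinf_ge. apply Kset_ne; auto.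
  intros x (P & HP & _ & _ & ->). apply Rmult_le_pos; [lra|].
  apply series_ge0; intros; apply series_ge0; intros. apply Rmult_le_pos; auto. apply tnorm_ge0.
Qed.

Lemma Kset_lb p rho q sigma : exists m, forall x, Kset p rho q sigma x -> m <= x.
Proof.
  exists 0. intros x (P & HP & _ & _ & ->). apply Rmult_le_pos; [lra|].
  apply series_ge0; intros; apply series_ge0; intros. apply Rmult_le_pos; auto. apply tnorm_ge0.
Qed.

Lemma summ_exists a r : (forall i, 0 <= a i) -> infinite_sum a r -> infinite_sum a (series a).
Proof. intros. rewrite (series_of a r); auto. Qed.

Lemma Dstar_le_cost p rho q sigma P :
  is_ensemble dim p rho -> is_ensemble dim q sigma ->
  (forall i j, 0 <= P i j) ->
  (forall i, infinite_sum (fun j => P i j) (p i)) ->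
  (forall j, infinite_sum (fun i => P i j) (q j)) ->
  Dstar dim p rho q sigma <= / 2 * series (fun i => series (fun j =>
                       P i j * tnorm (Msub (rho i) (sigma j)))).
Proof.
  intros He1 He2 HP Hrow Hcol.
  destruct He1 as (Hp0 & Hp1 & Hst1). destruct He2 as (Hq0 & Hq1 & Hst2).
  set (p' := fun k => P (fst (pr k)) (snd (pr k))).
  set (rho' := fun k => rho (fst (pr k))).
  set (sigma' := fun k => sigma (snd (pr k))).
  rewrite Dstar_eq. apply (Rinf_lb _ _ (Sset_lb _ _ _ _)).
  exists p', rho', p', sigma'. split; [|split; [|split; [|split]]].
  - split; [intros; apply HP|split; [|intros; apply Hst1]].
    apply (tonelli_rows P HP p 1 Hrow Hp1).
  - intros S. unfold ens_measure.
    set (r := fun i => if excluded_middle_informative (S (rho i)) then p i else 0).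
    destruct (summable_dom r p 1) as [l Hl]; auto.
    { intros i; unfold r; destruct (excluded_middle_informative _); split; auto; lra. }
    rewrite (series_of _ l Hl). symmetry. apply series_of.
    assert (Ha0 : forall i j, 0 <= (if excluded_middle_informative (S (rho i)) then P i j else 0))
      by (intros i j; destruct (excluded_middle_informative (S (rho i))); auto; lra).
    apply (tonelli_rows (fun i j => if excluded_middle_informative (S (rho i)) then P i j else 0)
             Ha0 r l); auto.
    intros i; unfold r; destruct (excluded_middle_informative (S (rho i))); auto. apply isum_zero.
  - split; [intros; apply HP|split; [|intros; apply Hst2]].
    apply (tonelli_cols P q 1 HP Hcol Hq1).
  - intros S. unfold ens_measure.
    set (r := fun j => if excluded_middle_informative (S (sigma j)) then q j else 0).
    destruct (summable_dom r q 1) as [l Hl]; auto.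
    { intros i; unfold r; destruct (excluded_middle_informative _); split; auto; lra. }
    rewrite (series_of _ l Hl). symmetry. apply series_of.
    assert (Ha0 : forall i j, 0 <= (if excluded_middle_informative (S (sigma j)) then P i j else 0))
      by (intros i j; destruct (excluded_middle_informative (S (sigma j))); auto; lra).
    apply (tonelli_cols (fun i j => if excluded_middle_informative (S (sigma j)) then P i j else 0)
             r l Ha0); auto.
    intros j; unfold r; destruct (excluded_middle_informative (S (sigma j))); auto. apply isum_zero.
  - unfold D0. f_equal.
    set (a := fun i j => P i j * tnorm (Msub (rho i) (sigma j))).
    assert (Ha0 : forall i j, 0 <= a i j).
    { intros; unfold a; apply Rmult_le_pos; auto; apply tnorm_ge0. }
    assert (Har : forall i, infinite_sum (a i) (series (a i))).
    { intros i. destruct (summable_dom (a i) (fun j => 2 * P i j) (2 * p i)) as [l Hl].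
      - intros j; split; auto. unfold a. generalize (dd_le2 _ _ (Hst1 i) (Hst2 j)) (HP i j).
        unfold dd; intros; nra.
      - apply isum_scal; auto.
      - rewrite (series_of _ l Hl); auto. }
    assert (Hr : infinite_sum (fun i => series (a i)) (series (fun i => series (a i)))).
    { destruct (summable_dom (fun i => series (a i)) (fun i => 2 * p i) 2) as [l Hl].
      - intros i; split. apply series_ge0; auto.
        apply (isum_le (a i) (fun j => 2 * P i j)).
        intros j. unfold a. generalize (dd_le2 _ _ (Hst1 i) (Hst2 j)) (HP i j).
        unfold dd; intros; nra. apply Har. apply isum_scal; auto.
      - assert (H2 := isum_scal p 1 2 Hp1). rewrite Rmult_1_r in H2. exact H2.
      - rewrite (series_of _ l Hl); auto. }
    symmetry. apply series_of.
    apply (isum_ext (fun k => a (fst (pr k)) (snd (pr k)))).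
    + intros k. unfold a, p', rho', sigma'. rewrite g_hom; auto.
    + apply (tonelli_rows a Ha0 _ _ Har Hr).
Qed.

Lemma Dstar_le_DK p rho q sigma :
  is_ensemble dim p rho -> is_ensemble dim q sigma ->
  Dstar dim p rho q sigma <= DK p rho q sigma.
Proof.
  intros. rewrite DK_eq. apply Rinf_ge. apply Kset_ne; auto.
  intros x (P & HP & Hr & Hc & ->). apply Dstar_le_cost; auto.
Qed.

End Ens.

Lemma term_le_isum a l i : (forall k, 0 <= a k) -> infinite_sum a l -> a i <= l.
Proof.
  intros H0 H. eapply Rle_trans; [|apply (partial_le' a l (S i)); auto]. simpl.
  generalize (fsum_ge0 i a ltac:(intros; auto)); lra.
Qed.

Lemma isum_abs_le x lx B lB : infinite_sum x lx -> infinite_sum B lB ->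
  (forall k, Rabs (x k) <= B k) -> Rabs lx <= lB.
Proof.
  intros Hx HB H. apply Rabs_le. split.
  - assert (- lB <= lx); [|lra].
    apply (isum_le (fun k => - B k) x); auto. intros k; specialize (H k); apply abs_le_iv in H; lra.
    assert (Hm := isum_scal B lB (-1) HB). replace (- lB) with (-1 * lB) by ring.
    eapply isum_ext; [|exact Hm]. intros; simpl; ring.
  - apply (isum_le x B); auto. intros k; specialize (H k); apply abs_le_iv in H; lra.
Qed.

Section Inv.
Variable dim : option nat.

Lemma ens_meas_ind p rho S : is_ensemble dim p rho ->
  infinite_sum (fun i => if excluded_middle_informative (S (rho i)) then p i else 0)
               (ens_measure p rho S).
Proof.
  intros (H0 & H1 & _). unfold ens_measure. apply series_spec.
  apply (summable_dom _ p 1); auto. intros i; destruct (excluded_middle_informative _); split; auto; lra.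
Qed.

Lemma ens_terms_ge0 p rho S : is_ensemble dim p rho ->
  forall i, 0 <= (if excluded_middle_informative (S (rho i)) then p i else 0).
Proof. intros (H0 & _) i. destruct (excluded_middle_informative (S (rho i))); auto; lra. Qed.

Lemma integral_summable p rho g G : is_ensemble dim p rho ->
  (forall i, Rabs (g i) <= G) -> exists l, infinite_sum (fun i => p i * g i) l.
Proof.
  intros (H0 & H1 & _) Hg. apply (summable_absdom _ (fun i => G * p i) (G * 1)).
  - intros i. rewrite Rabs_mult, Rabs_right by (apply Rle_ge; auto). rewrite Rmult_comm.
    apply Rmult_le_compat_r; auto.
  - apply isum_scal; auto.
Qed.

Lemma invariance p rho p' rho' f M :
  is_ensemble dim p rho -> is_ensemble dim p' rho' -> same_measure p rho p' rho' ->
  (forall x, is_state dim x -> Rabs (f x) <= M) ->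
  series (fun i => p i * f (rho i)) = series (fun k => p' k * f (rho' k)).
Proof.
  intros He He' Hsm Hf.
  assert (He0 := He); assert (He0' := He').
  destruct He as (Hp0 & Hp1 & Hst). destruct He' as (Hp0' & Hp1' & Hst').
  set (w := fun x => ens_measure p rho (fun y => y = x)).
  set (P := fun i k => p i / w (rho i) *
       (if excluded_middle_informative (rho' k = rho i) then p' k else 0)).
  set (g := fun x => f x + M).
  assert (Hg : forall x, is_state dim x -> 0 <= g x <= 2 * M).
  { intros x Hx; specialize (Hf x Hx); apply abs_le_iv in Hf; unfold g; lra. }
  assert (Hw0 : forall x, 0 <= w x).
  { intros x. unfold w. apply (isum_ge0 _ _ (ens_terms_ge0 p rho _ He0) (ens_meas_ind p rho _ He0)). }
  assert (Hpw : forall i, p i <= w (rho i)).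
  { intros i. generalize (term_le_isum _ _ i (ens_terms_ge0 p rho _ He0) (ens_meas_ind p rho (fun y => y = rho i) He0)).
    destruct (excluded_middle_informative _) as [_|Hn]; [auto|tauto]. }
  assert (HP0 : forall i k, 0 <= P i k).
  { intros i k. unfold P. apply Rmult_le_pos. unfold Rdiv. apply Rmult_le_pos; auto.
    destruct (Req_dec (w (rho i)) 0) as [->|Hn]. rewrite Rinv_0; lra.
    apply Rlt_le, Rinv_0_lt_compat. specialize (Hw0 (rho i)); lra.
    destruct (excluded_middle_informative (rho' k = rho i)); auto; lra. }
  assert (Hrow : forall i, infinite_sum (fun k => P i k) (p i)).
  { intros i. unfold P.
    assert (Hm := ens_meas_ind p' rho' (fun y => y = rho i) He0').
    rewrite <- (Hsm (fun y => y = rho i)) in Hm. fold (w (rho i)) in Hm.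
    apply (isum_scal _ _ (p i / w (rho i))) in Hm.
    destruct (Req_dec (w (rho i)) 0) as [Hz|Hn].
    - assert (p i = 0) by (specialize (Hpw i); specialize (Hp0 i); lra).
      rewrite H in Hm |- *. replace (0 / w (rho i) * w (rho i)) with 0 in Hm by (unfold Rdiv; ring). exact Hm.
    - replace (p i / w (rho i) * w (rho i)) with (p i) in Hm by (field; auto). exact Hm. }
  set (a := fun i k => P i k * g (rho i)).
  assert (Ha0 : forall i k, 0 <= a i k) by (intros; unfold a; apply Rmult_le_pos; auto; apply Hg; auto).
  assert (Hr : forall i, infinite_sum (a i) (p i * g (rho i))).
  { intros i. unfold a. assert (H := isum_scal _ _ (g (rho i)) (Hrow i)).
    replace (p i * g (rho i)) with (g (rho i) * p i) by ring.
    eapply isum_ext; [|exact H]. intros; simpl; ring. }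
  destruct (integral_summable p rho (fun i => g (rho i)) (2 * M) He0) as [S1 HS1].
  { intros i. rewrite Rabs_right by (apply Rle_ge, Hg; auto). apply Hg; auto. }
  destruct (fubini a _ S1 Ha0 Hr HS1) as [c [Hc HcS]].
  assert (Hcol : forall k, c k = p' k * g (rho' k)).
  { intros k. eapply uniqueness_sum; [apply Hc|].
    assert (Hm := ens_meas_ind p rho (fun y => y = rho' k) He0). fold (w (rho' k)) in Hm.
    apply (isum_scal _ _ (p' k / w (rho' k) * g (rho' k))) in Hm.
    replace (p' k / w (rho' k) * g (rho' k) * w (rho' k)) with (p' k * g (rho' k)) in Hm.
    - eapply isum_ext; [|exact Hm]. intros i. simpl. unfold a, P.
      destruct (excluded_middle_informative (rho i = rho' k)) as [E|E];
      destruct (excluded_middle_informative (rho' k = rho i)) as [E'|E'].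
      + rewrite E. unfold Rdiv; ring.
      + exfalso; apply E'; symmetry; exact E.
      + exfalso; apply E; symmetry; exact E'.
      + ring.
    - destruct (Req_dec (w (rho' k)) 0) as [Hz|Hn].
      + assert (p' k = 0).
        { generalize (term_le_isum _ _ k (ens_terms_ge0 p' rho' _ He0') (ens_meas_ind p' rho' (fun y => y = rho' k) He0')).
          rewrite <- Hsm. fold (w (rho' k)). destruct (excluded_middle_informative _) as [_|Hn]; [|tauto].
          specialize (Hp0' k); lra. }
        rewrite H, Hz. unfold Rdiv; ring.
      + field; auto. }
  assert (HcS' : infinite_sum (fun k => p' k * g (rho' k)) S1) by (eapply isum_ext; [|exact HcS]; auto).
  assert (E1 : infinite_sum (fun i => p i * f (rho i)) (S1 - M)).
  { assert (H := isum_minus _ _ _ _ HS1 (isum_scal _ _ M Hp1)). rewrite Rmult_1_r in H.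
    eapply isum_ext; [|exact H]. intros; unfold g; simpl; ring. }
  assert (E2 : infinite_sum (fun k => p' k * f (rho' k)) (S1 - M)).
  { assert (H := isum_minus _ _ _ _ HcS' (isum_scal _ _ M Hp1')). rewrite Rmult_1_r in H.
    eapply isum_ext; [|exact H]. intros; unfold g; simpl; ring. }
  rewrite (series_of _ _ E1), (series_of _ _ E2). reflexivity.
Qed.

End Inv.

Section AC.
Variable dim : option nat.

Lemma finite_delta f (sigma : nat -> Mat) K eps :
  continuous_on_states dim f -> (forall j, is_state dim (sigma j)) -> 0 < eps ->
  exists delta, 0 < delta /\ forall j, (j < K)%nat -> forall x, is_state dim x ->
    tnorm (Msub (sigma j) x) < delta -> Rabs (f (sigma j) - f x) < eps.
Proof.
  intros Hc Hs He. induction K.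
  - exists 1; split; [lra|intros; lia].
  - destruct IHK as [d1 [Hd1 H1]].
    destruct (Hc (sigma K) (Hs K) eps He) as [d2 [Hd2 H2]].
    exists (Rmin d1 d2); split. apply Rmin_pos; auto.
    intros j Hj x Hx Hd. destruct (Nat.eq_dec j K) as [->|Hn].
    + apply H2; auto. eapply Rlt_le_trans; [exact Hd|apply Rmin_r].
    + apply H1; auto; [lia|]. eapply Rlt_le_trans; [exact Hd|apply Rmin_l].
Qed.

Lemma tail_measure q sigma K : is_ensemble dim q sigma ->
  ens_measure q sigma (fun x => forall j, (j < K)%nat -> x <> sigma j) <= 1 - fsum K q.
Proof.
  intros He. assert (He0 := He). destruct He as (H0 & H1 & _).
  apply (isum_le (fun i => if excluded_middle_informative ((fun x => forall j, (j < K)%nat -> x <> sigma j) (sigma i)) then q i else 0) (fun j => q j - (if Nat.ltb j K then q j else 0))).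
  - intros j. destruct (excluded_middle_informative _) as [E|E];
    destruct (Nat.ltb_spec j K).
    + exfalso; apply (E j); auto.
    + lra.
    + specialize (H0 j); lra.
    + specialize (H0 j); lra.
  - apply (ens_meas_ind dim q sigma (fun x => forall j, (j < K)%nat -> x <> sigma j) He0).
  - apply isum_minus; auto.
    replace (fsum K q) with (fsum K (fun j => if Nat.ltb j K then q j else 0)).
    apply isum_finite. intros i Hi. destruct (Nat.ltb_spec i K); [lia|reflexivity].
    apply fsum_ext; intros i Hi. destruct (Nat.ltb_spec i K); [reflexivity|lia].
Qed.

Theorem a_to_c p rho q sigma :
  is_ensemble dim q sigma -> (forall n, is_ensemble dim (p n) (rho n)) ->
  Un_cv (fun n => Dstar dim (p n) (rho n) q sigma) 0 -> weak_conv dim p rho q sigma.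
Proof.
  intros Hq Hp HD f [M HM] Hc eps He.
  assert (Hq0 := Hq). destruct Hq0 as (Hq0 & Hq1 & Hqs).
  assert (HM0 : 0 <= M) by (eapply Rle_trans; [apply Rabs_pos|apply (HM (sigma 0%nat) (Hqs 0%nat))]).
  set (e1 := eps / (4 * (M + 1))).
  assert (He1 : 0 < e1) by (unfold e1; apply Rdiv_lt_0_compat; lra).
  destruct (isum_tail _ _ _ Hq1 He1) as [K HK]. specialize (HK K (le_n K)).
  destruct (finite_delta f sigma K e1 Hc Hqs He1) as [delta [Hdel Hdelta]].
  set (C := 2 * M + 8 * M / delta + 1).
  assert (HC : 1 <= C). { unfold C. assert (0 <= 8 * M / delta) by (apply Rmult_le_pos; [lra|apply Rlt_le, Rinv_0_lt_compat; auto]). lra. }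
  set (eta := eps / (4 * C)).
  assert (Heta : 0 < eta) by (unfold eta; apply Rdiv_lt_0_compat; lra).
  destruct (HD eta Heta) as [N HN]. exists N. intros n Hn.
  specialize (HN n Hn). unfold R_dist in HN. rewrite Rminus_0_r in HN.
  assert (HDs0 := Dstar_ge0 dim _ _ _ _ (Hp n) Hq).
  rewrite Rabs_right in HN by lra.
  rewrite Dstar_eq in HN, HDs0.
  destruct (Rinf_approx _ (eta - Rinf (Sset dim (p n) (rho n) q sigma))
              (Sset_ne dim _ _ _ _ (Hp n) Hq) (Sset_lb dim _ _ _ _) ltac:(lra))
    as [x [(p' & rho' & q' & sigma' & Hp' & Hsp & Hq' & Hsq & ->) Hx]].
  replace (Rinf (Sset dim (p n) (rho n) q sigma) + (eta - Rinf (Sset dim (p n) (rho n) q sigma))) with eta in Hx by ring.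
  unfold R_dist.
  rewrite (invariance dim _ _ _ _ f M (Hp n) Hp' Hsp HM).
  rewrite (invariance dim _ _ _ _ f M Hq Hq' Hsq HM).
  assert (Hp'0 := Hp'). destruct Hp'0 as (Hp0' & Hp1' & Hps').
  assert (Hq'0 := Hq'). destruct Hq'0 as (Hq0' & Hq1' & Hqs').
  set (g := fun k => tnorm (Msub (Mscale (p' k) (rho' k)) (Mscale (q' k) (sigma' k)))).
  assert (Hg : forall k, 0 <= g k <= p' k + q' k).
  { intros k. unfold g. rewrite (g_T dim); auto. generalize (T_bounds dim (p' k) (rho' k) (q' k) (sigma' k) (Hps' k) (Hqs' k)).
    rewrite !Rabs_right by (apply Rle_ge; auto). auto. }
  destruct (summable_dom g (fun k => p' k + q' k) 2) as [G HG]; auto.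
  { replace 2 with (1 + 1) by ring. apply isum_plus; auto. }
  assert (HDG : D0 p' rho' q' sigma' = / 2 * G) by (unfold D0; f_equal; apply (series_of g G HG)).
  rewrite HDG in Hx.
  set (SF := fun x => forall j, (j < K)%nat -> x <> sigma j).
  assert (Hm := ens_meas_ind dim q' sigma' SF Hq').
  rewrite <- (Hsq SF) in Hm.
  assert (HmF := tail_measure q sigma K Hq). fold SF in HmF.
  set (mF := ens_measure q sigma SF) in *.
  apply Rlt_le in HK. apply abs_le_iv in HK.
  destruct (integral_summable dim p' rho' (fun k => f (rho' k)) M Hp') as [I1 HI1].
  { intros; apply HM; auto. }
  destruct (integral_summable dim q' sigma' (fun k => f (sigma' k)) M Hq') as [I2 HI2].
  { intros; apply HM; auto. }
  rewrite (series_of _ _ HI1), (series_of _ _ HI2).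
  assert (Hbound : Rabs (I1 - I2) <= M * G + e1 * 1 + 2 * M * mF + 4 * M / delta * G).
  { apply (isum_abs_le (fun k => p' k * f (rho' k) - q' k * f (sigma' k)) _
      (fun k => M * g k + e1 * q' k + 2 * M * (if excluded_middle_informative (SF (sigma' k)) then q' k else 0)
                + 4 * M / delta * g k) _).
    - apply isum_minus; auto.
    - apply isum_plus; [apply isum_plus; [apply isum_plus|]|]; apply isum_scal; auto.
    - intros k.
      assert (Hg2 : Rabs (p' k - q' k) <= g k) by (unfold g; apply (g_2 dim); auto).
      assert (Hg5 : q' k * dd (sigma' k) (rho' k) <= g k + Rabs (p' k - q' k)) by (unfold g; apply (g_5 dim); auto).
      assert (Hfr := HM _ (Hps' k)). assert (Hfs := HM _ (Hqs' k)).
      assert (Hdf : Rabs (f (rho' k) - f (sigma' k)) <= 2 * M).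
      { eapply Rle_trans; [apply Rabs_triang|]. rewrite Rabs_Ropp. lra. }
      assert (Hsplit : Rabs (p' k * f (rho' k) - q' k * f (sigma' k)) <=
                       M * g k + q' k * Rabs (f (rho' k) - f (sigma' k))).
      { replace (p' k * f (rho' k) - q' k * f (sigma' k)) with
          ((p' k - q' k) * f (rho' k) + q' k * (f (rho' k) - f (sigma' k))) by ring.
        eapply Rle_trans; [apply Rabs_triang|]. rewrite !Rabs_mult.
        rewrite (Rabs_right (q' k)) by (apply Rle_ge; auto).
        apply Rplus_le_compat_r. generalize (Rabs_pos (p' k - q' k)) (Rabs_pos (f (rho' k))). nra. }
      assert (Hq'k := Hq0' k). assert (Hgk := Hg k).
      assert (Hx4 : 0 <= 4 * M / delta * g k).
      { apply Rmult_le_pos; [|lra]. apply Rmult_le_pos; [lra|apply Rlt_le, Rinv_0_lt_compat; auto]. }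
      destruct (excluded_middle_informative (SF (sigma' k))) as [Hin|Hout].
      + assert (q' k * Rabs (f (rho' k) - f (sigma' k)) <= 2 * M * q' k) by nra.
        assert (0 <= e1 * q' k) by nra. lra.
      + assert (Hex : exists j, (j < K)%nat /\ sigma' k = sigma j).
        { apply NNPP; intros Hne. apply Hout. intros j Hj Heq. apply Hne; exists j; auto. }
        destruct Hex as [j [Hj Heq]].
        destruct (Rlt_le_dec (dd (sigma' k) (rho' k)) delta) as [Hlt|Hge].
        * assert (Habs : Rabs (f (sigma j) - f (rho' k)) < e1).
          { apply Hdelta; auto. rewrite <- Heq. exact Hlt. }
          rewrite <- Heq, Rabs_minus_sym in Habs.
          assert (q' k * Rabs (f (rho' k) - f (sigma' k)) <= e1 * q' k) by nra.
          assert (0 <= 2 * M * 0) by lra. lra.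
        * assert (q' k * 1 <= q' k * dd (sigma' k) (rho' k) / delta).
          { unfold Rdiv. rewrite Rmult_assoc. apply Rmult_le_compat_l; auto.
            apply (Rmult_le_reg_r delta); auto. rewrite Rmult_assoc, Rinv_l by lra. lra. }
          assert (q' k * dd (sigma' k) (rho' k) <= 2 * g k) by lra.
          assert (q' k * Rabs (f (rho' k) - f (sigma' k)) <= 2 * M * q' k) by nra.
          assert (2 * M * q' k <= 4 * M / delta * g k).
          { apply (Rmult_le_reg_r delta); auto. unfold Rdiv.
            replace (4 * M * / delta * g k * delta) with (4 * M * g k) by (field; lra).
            assert (q' k * delta <= q' k * dd (sigma' k) (rho' k)) by (apply Rmult_le_compat_l; auto).
            assert (q' k * delta <= 2 * g k) by lra.
            assert (2 * M * (q' k * delta) <= 2 * M * (2 * g k)) by (apply Rmult_le_compat_l; lra).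
            lra. }
          assert (0 <= e1 * q' k) by nra. lra. }
  assert (HG2 : G < 2 * eta) by lra.
  assert (HG0 : 0 <= G) by (eapply isum_ge0; [|exact HG]; intros; apply Hg).
  assert (HmF' : mF <= e1) by lra.
  assert (Hm0 : 0 <= mF) by (eapply isum_ge0; [|exact Hm]; apply (ens_terms_ge0 dim); auto).
  assert (E1 : (M + 4 * M / delta) * G <= eps / 4).
  { assert ((M + 4 * M / delta) * G <= (M + 4 * M / delta) * (2 * eta)).
    { apply Rmult_le_compat_l; [|lra]. assert (0 <= 4 * M / delta) by (apply Rmult_le_pos; [lra|apply Rlt_le, Rinv_0_lt_compat; auto]). lra. }
    assert ((M + 4 * M / delta) * (2 * eta) = (2 * M + 8 * M / delta) * eta) by (field; lra).
    assert ((2 * M + 8 * M / delta) * eta <= C * eta) by (apply Rmult_le_compat_r; unfold C; lra).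
    assert (C * eta = eps / 4) by (unfold eta; field; lra).
    lra. }
  assert (E2 : e1 * 1 + 2 * M * mF <= eps / 2).
  { assert (2 * M * mF <= 2 * M * e1) by nra.
    assert (e1 * (1 + 2 * M) <= eps / 2).
    { unfold e1. apply (Rmult_le_reg_r (4 * (M + 1))); [lra|].
      replace (eps / (4 * (M + 1)) * (1 + 2 * M) * (4 * (M + 1))) with (eps * (1 + 2 * M)) by (field; lra).
      nra. }
    lra. }
  lra.
Qed.

End AC.

Lemma ind_first (Q : nat -> Prop) K :
  fsum K (fun c => ind (Q c /\ forall c', (c' < c)%nat -> ~ Q c')) =
  ind (exists c, (c < K)%nat /\ Q c).
Proof.
  induction K; simpl.
  - rewrite ind_F; auto. intros [c [Hc _]]; lia.
  - rewrite IHK. destruct (classic (exists c, (c < K)%nat /\ Q c)) as [[c [Hc HQ]]|Hn].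
    + rewrite (ind_T (exists c, (c < K)%nat /\ Q c)) by eauto.
      rewrite (ind_F (Q K /\ _)).
      * rewrite (ind_T (exists c0, (c0 < S K)%nat /\ Q c0)). ring. exists c; split; auto.
      * intros [_ H]; apply (H c Hc HQ).
    + rewrite (ind_F _ Hn). destruct (classic (Q K)) as [HK|HK].
      * rewrite !ind_T. ring. exists K; split; auto. split; auto.
        intros c' Hc' HQ. apply Hn; eauto.
      * rewrite !ind_F. ring. intros [c [Hc HQ]]. assert (c = K \/ c < K)%nat as [->|Hl] by lia; eauto.
        intros [H _]; tauto.
Qed.

Lemma ind_first_le1 (Q : nat -> Prop) K :
  fsum K (fun c => ind (Q c /\ forall c', (c' < c)%nat -> ~ Q c')) <= 1.
Proof. rewrite ind_first. apply ind_01. Qed.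

Lemma ratio01 m a : 0 <= m <= a -> 0 <= m / a <= 1.
Proof.
  intros H. destruct (Req_dec a 0) as [->|Hn].
  - unfold Rdiv; rewrite Rinv_0; lra.
  - split. apply Rmult_le_pos; [lra|apply Rlt_le, Rinv_0_lt_compat; lra].
    apply (Rmult_le_reg_r a); [lra|]. unfold Rdiv; rewrite Rmult_assoc, Rinv_l; lra.
Qed.

Lemma ratio_mul m a : 0 <= m <= a -> m / a * a = m.
Proof.
  intros H. destruct (Req_dec a 0) as [->|Hn].
  - assert (m = 0) by lra. subst; unfold Rdiv; ring.
  - field; auto.
Qed.

Section Coupling.
Variable dim : option nat.
Variables (p : nat -> R) (rho : nat -> Mat) (q : nat -> R) (sigma : nat -> Mat).
Variables (K : nat) (delta : R).
Hypothesis Hp : is_ensemble dim p rho.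
Hypothesis Hq : is_ensemble dim q sigma.
Hypothesis Hdelta : 0 < delta.

Definition QA x c := dd x (sigma c) < delta.
Definition cellA c x := ind (QA x c /\ forall c', (c' < c)%nat -> ~ QA x c').
Definition QB j c := (j < K)%nat /\ dd (sigma j) (sigma c) < delta.
Definition cellB c j := ind (QB j c /\ forall c', (c' < c)%nat -> ~ QB j c').
Definition ca c := series (fun i => cellA c (rho i) * p i).
Definition cb c := fsum K (fun j => cellB c j * q j).
Definition cm c := Rmin (ca c) (cb c).
Definition ra c := cm c / ca c.
Definition rb c := cm c / cb c.
Definition lam c := cm c / (ca c * cb c).
Definition uu i := p i - fsum K (fun c => cellA c (rho i) * ra c * p i).
Definition vv j := q j - fsum K (fun c => cellB c j * rb c * q j).
Definition rr := 1 - fsum K cm.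
Definition AA i j := fsum K (fun c => cellA c (rho i) * cellB c j * lam c * p i * q j).
Definition UU i j := uu i * vv j / rr.
Definition PP i j := AA i j + UU i j.

Lemma p0 i : 0 <= p i. Proof. destruct Hp as (H & _); auto. Qed.
Lemma q0 j : 0 <= q j. Proof. destruct Hq as (H & _); auto. Qed.
Lemma p1 : infinite_sum p 1. Proof. destruct Hp as (_ & H & _); auto. Qed.
Lemma q1 : infinite_sum q 1. Proof. destruct Hq as (_ & H & _); auto. Qed.

Lemma a_sum c : infinite_sum (fun i => cellA c (rho i) * p i) (ca c).
Proof.
  unfold ca. apply series_spec. apply (summable_dom _ p 1); [|apply p1].
  intros i. generalize (ind_01 (QA (rho i) c /\ forall c', (c' < c)%nat -> ~ QA (rho i) c')) (p0 i).
  unfold cellA. intros; split; nra.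
Qed.

Lemma cellB_out c j : (K <= j)%nat -> cellB c j = 0.
Proof. intros H. unfold cellB. apply ind_F. intros [[Hj _] _]; lia. Qed.

Lemma b_sum c : infinite_sum (fun j => cellB c j * q j) (cb c).
Proof. unfold cb. apply isum_finite. intros i Hi. rewrite cellB_out; auto; ring. Qed.

Lemma ca0 c : 0 <= ca c.
Proof. apply (isum_ge0 _ _ ltac:(intros; apply Rmult_le_pos; [apply ind_01|apply p0]) (a_sum c)). Qed.
Lemma cb0 c : 0 <= cb c.
Proof. apply (isum_ge0 _ _ ltac:(intros; apply Rmult_le_pos; [apply ind_01|apply q0]) (b_sum c)). Qed.
Lemma cm_a c : 0 <= cm c <= ca c.
Proof. unfold cm. generalize (ca0 c) (cb0 c). intros. split. apply Rmin_glb; auto. apply Rmin_l. Qed.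
Lemma cm_b c : 0 <= cm c <= cb c.
Proof. unfold cm. generalize (ca0 c) (cb0 c). intros. split. apply Rmin_glb; auto. apply Rmin_r. Qed.
Lemma ra01 c : 0 <= ra c <= 1. Proof. apply ratio01, cm_a. Qed.
Lemma rb01 c : 0 <= rb c <= 1. Proof. apply ratio01, cm_b. Qed.
Lemma ra_a c : ra c * ca c = cm c. Proof. apply ratio_mul, cm_a. Qed.
Lemma rb_b c : rb c * cb c = cm c. Proof. apply ratio_mul, cm_b. Qed.
Lemma lam_b c : lam c * cb c = ra c.
Proof.
  unfold lam, ra. generalize (cm_a c) (cm_b c). intros.
  destruct (Req_dec (cb c) 0) as [Hb|Hb]. { assert (cm c = 0) by lra. rewrite H1, Hb. unfold Rdiv; ring. }
  destruct (Req_dec (ca c) 0) as [Ha|Ha]. { assert (cm c = 0) by lra. rewrite H1, Ha. unfold Rdiv; ring. }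
  field; auto.
Qed.
Lemma lam_a c : lam c * ca c = rb c.
Proof.
  unfold lam, rb. generalize (cm_a c) (cm_b c). intros.
  destruct (Req_dec (cb c) 0) as [Hb|Hb]. { assert (cm c = 0) by lra. rewrite H1, Hb. unfold Rdiv; ring. }
  destruct (Req_dec (ca c) 0) as [Ha|Ha]. { assert (cm c = 0) by lra. rewrite H1, Ha. unfold Rdiv; ring. }
  field; auto.
Qed.
Lemma lam0 c : 0 <= lam c.
Proof.
  unfold lam. apply Rmult_le_pos. apply cm_a.
  destruct (Req_dec (ca c * cb c) 0) as [H|H]. rewrite H, Rinv_0; lra.
  apply Rlt_le, Rinv_0_lt_compat. generalize (ca0 c) (cb0 c); intros. assert (0 <= ca c * cb c) by nra. lra.
Qed.

Lemma cellA_sum x : fsum K (fun c => cellA c x) <= 1.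
Proof. apply (ind_first_le1 (QA x)). Qed.
Lemma cellB_sum j : fsum K (fun c => cellB c j) <= 1.
Proof. apply (ind_first_le1 (QB j)). Qed.

Lemma uu_bounds i : 0 <= uu i <= p i.
Proof.
  unfold uu. assert (0 <= fsum K (fun c => cellA c (rho i) * ra c * p i) <= p i); [|lra].
  split. apply fsum_ge0; intros c _. generalize (ind_01 (QA (rho i) c /\ forall c', (c' < c)%nat -> ~ QA (rho i) c')) (ra01 c) (p0 i).
  unfold cellA; intros. assert (0 <= ind (QA (rho i) c /\ (forall c' : nat, (c' < c)%nat -> ~ QA (rho i) c')) * ra c) by nra. nra.
  eapply Rle_trans. apply (fsum_le K _ (fun c => cellA c (rho i) * p i)).
  intros c _. generalize (ind_01 (QA (rho i) c /\ forall c', (c' < c)%nat -> ~ QA (rho i) c')) (ra01 c) (p0 i).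
  unfold cellA; intros. assert (0 <= ind (QA (rho i) c /\ (forall c' : nat, (c' < c)%nat -> ~ QA (rho i) c')) * p i) by nra. nra.
  rewrite (fsum_ext _ _ (fun c => p i * cellA c (rho i))) by (intros; ring).
  rewrite fsum_scal. generalize (cellA_sum (rho i)) (p0 i); intros; nra.
Qed.

Lemma vv_bounds j : 0 <= vv j <= q j.
Proof.
  unfold vv. assert (0 <= fsum K (fun c => cellB c j * rb c * q j) <= q j); [|lra].
  split. apply fsum_ge0; intros c _. generalize (ind_01 (QB j c /\ forall c', (c' < c)%nat -> ~ QB j c')) (rb01 c) (q0 j).
  unfold cellB; intros. assert (0 <= ind (QB j c /\ (forall c' : nat, (c' < c)%nat -> ~ QB j c')) * rb c) by nra. nra.
  eapply Rle_trans. apply (fsum_le K _ (fun c => cellB c j * q j)).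
  intros c _. generalize (ind_01 (QB j c /\ forall c', (c' < c)%nat -> ~ QB j c')) (rb01 c) (q0 j).
  unfold cellB; intros. assert (0 <= ind (QB j c /\ (forall c' : nat, (c' < c)%nat -> ~ QB j c')) * q j) by nra. nra.
  rewrite (fsum_ext _ _ (fun c => q j * cellB c j)) by (intros; ring).
  rewrite fsum_scal. generalize (cellB_sum j) (q0 j); intros; nra.
Qed.

Lemma uu_sum : infinite_sum uu rr.
Proof.
  unfold uu, rr. apply isum_minus. apply p1.
  apply isum_fsum. intros c _. rewrite <- ra_a.
  assert (H := isum_scal _ _ (ra c) (a_sum c)). eapply isum_ext; [|exact H]. intros; simpl; ring.
Qed.

Lemma vv_sum : infinite_sum vv rr.
Proof.
  unfold vv, rr. apply isum_minus. apply q1.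
  apply isum_fsum. intros c _. rewrite <- rb_b.
  assert (H := isum_scal _ _ (rb c) (b_sum c)). eapply isum_ext; [|exact H]. intros; simpl; ring.
Qed.

Lemma rr0 : 0 <= rr.
Proof. apply (isum_ge0 _ _ ltac:(intros; apply uu_bounds) uu_sum). Qed.

Lemma AA_row i : infinite_sum (fun j => AA i j) (p i - uu i).
Proof.
  unfold AA, uu. replace (p i - (p i - fsum K (fun c => cellA c (rho i) * ra c * p i)))
    with (fsum K (fun c => cellA c (rho i) * ra c * p i)) by ring.
  apply isum_fsum. intros c _.
  assert (H := isum_scal _ _ (cellA c (rho i) * lam c * p i) (b_sum c)).
  replace (cellA c (rho i) * ra c * p i) with (cellA c (rho i) * lam c * p i * cb c)
    by (rewrite <- lam_b; ring).
  eapply isum_ext; [|exact H]. intros; simpl; ring.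
Qed.

Lemma AA_col j : infinite_sum (fun i => AA i j) (q j - vv j).
Proof.
  unfold AA, vv. replace (q j - (q j - fsum K (fun c => cellB c j * rb c * q j)))
    with (fsum K (fun c => cellB c j * rb c * q j)) by ring.
  apply isum_fsum. intros c _.
  assert (H := isum_scal _ _ (cellB c j * lam c * q j) (a_sum c)).
  replace (cellB c j * rb c * q j) with (cellB c j * lam c * q j * ca c)
    by (rewrite <- lam_a; ring).
  eapply isum_ext; [|exact H]. intros; simpl; ring.
Qed.

Lemma UU_row i : infinite_sum (fun j => UU i j) (uu i).
Proof.
  unfold UU. assert (H := isum_scal _ _ (uu i / rr) vv_sum).
  destruct (Req_dec rr 0) as [Hz|Hn].
  - assert (uu i = 0).
    { generalize (term_le_isum uu rr i ltac:(intros; apply uu_bounds) uu_sum) (uu_bounds i). lra. }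
    rewrite H0 in H |- *. replace (0 / rr * rr) with 0 in H by (unfold Rdiv; ring).
    eapply isum_ext; [|exact H]. intros; simpl; unfold Rdiv; ring.
  - replace (uu i / rr * rr) with (uu i) in H by (field; auto).
    eapply isum_ext; [|exact H]. intros; simpl; unfold Rdiv; ring.
Qed.

Lemma UU_col j : infinite_sum (fun i => UU i j) (vv j).
Proof.
  unfold UU. assert (H := isum_scal _ _ (vv j / rr) uu_sum).
  destruct (Req_dec rr 0) as [Hz|Hn].
  - assert (vv j = 0).
    { generalize (term_le_isum vv rr j ltac:(intros; apply vv_bounds) vv_sum) (vv_bounds j). lra. }
    rewrite H0 in H |- *. replace (0 / rr * rr) with 0 in H by (unfold Rdiv; ring).
    eapply isum_ext; [|exact H]. intros; simpl; unfold Rdiv; ring.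
  - replace (vv j / rr * rr) with (vv j) in H by (field; auto).
    eapply isum_ext; [|exact H]. intros; simpl; unfold Rdiv; ring.
Qed.

Lemma AA0 i j : 0 <= AA i j.
Proof.
  unfold AA. apply fsum_ge0; intros c _.
  generalize (ind_01 (QA (rho i) c /\ forall c', (c' < c)%nat -> ~ QA (rho i) c'))
             (ind_01 (QB j c /\ forall c', (c' < c)%nat -> ~ QB j c')) (lam0 c) (p0 i) (q0 j).
  unfold cellA, cellB. intros. apply Rmult_le_pos; [apply Rmult_le_pos; [apply Rmult_le_pos; [apply Rmult_le_pos|]|]|]; lra.
Qed.

Lemma UU0 i j : 0 <= UU i j.
Proof.
  unfold UU, Rdiv. apply Rmult_le_pos. apply Rmult_le_pos; [apply uu_bounds|apply vv_bounds].
  destruct (Req_dec rr 0) as [H|H]. rewrite H, Rinv_0; lra. apply Rlt_le, Rinv_0_lt_compat.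
  generalize rr0; lra.
Qed.

Lemma PP0 i j : 0 <= PP i j.
Proof. unfold PP. generalize (AA0 i j) (UU0 i j); lra. Qed.

Lemma PP_row i : infinite_sum (fun j => PP i j) (p i).
Proof. replace (p i) with ((p i - uu i) + uu i) by ring. apply isum_plus; [apply AA_row|apply UU_row]. Qed.
Lemma PP_col j : infinite_sum (fun i => PP i j) (q j).
Proof. replace (q j) with ((q j - vv j) + vv j) by ring. apply isum_plus; [apply AA_col|apply UU_col]. Qed.

Lemma AA_cost i j : AA i j * dd (rho i) (sigma j) <= 2 * delta * AA i j.
Proof.
  unfold AA. rewrite Rmult_comm, <- fsum_scal, <- fsum_scal. apply fsum_le; intros c Hc.
  unfold cellA, cellB.
  destruct (classic (QA (rho i) c /\ forall c', (c' < c)%nat -> ~ QA (rho i) c')) as [HA|HA];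
  [rewrite (ind_T _ HA)|rewrite (ind_F _ HA); lra].
  destruct (classic (QB j c /\ forall c', (c' < c)%nat -> ~ QB j c')) as [HB|HB];
  [rewrite (ind_T _ HB)|rewrite (ind_F _ HB); lra].
  destruct HA as [HA _]; destruct HB as [[_ HB] _]. unfold QA in HA.
  destruct Hp as (_ & _ & Hsp). destruct Hq as (_ & _ & Hsq).
  assert (dd (rho i) (sigma j) <= 2 * delta).
  { eapply Rle_trans; [apply (dd_tri dim _ (sigma c)); auto|].
    rewrite (dd_sym dim (sigma c)); auto. lra. }
  generalize (lam0 c) (p0 i) (q0 j). intros.
  apply Rmult_le_compat_r; auto. apply Rmult_le_pos; [apply Rmult_le_pos|]; auto. rewrite !Rmult_1_l; auto.
Qed.

Lemma coupling_bound : DK p rho q sigma <= delta + rr.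
Proof.
  destruct Hp as (_ & _ & Hsp). destruct Hq as (_ & _ & Hsq).
  rewrite DK_eq. eapply Rle_trans. apply (Rinf_lb _ _ (Kset_lb _ _ _ _)).
  exists PP. split; [apply PP0|split; [apply PP_row|split; [apply PP_col|reflexivity]]].
  set (cost := fun i j => PP i j * tnorm (Msub (rho i) (sigma j))).
  assert (Hc0 : forall i j, 0 <= cost i j) by (intros; apply Rmult_le_pos; [apply PP0|apply tnorm_ge0]).
  assert (Hcd : forall i j, cost i j <= 2 * delta * AA i j + 2 * UU i j).
  { intros i j. unfold cost, PP. fold (dd (rho i) (sigma j)).
    generalize (AA_cost i j) (dd_le2 dim _ _ (Hsp i) (Hsq j)) (UU0 i j). intros. nra. }
  assert (Hrow : forall i, infinite_sum (cost i) (series (cost i)) /\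
                 series (cost i) <= 2 * delta * (p i - uu i) + 2 * uu i).
  { intros i. assert (Hb : infinite_sum (fun j => 2 * delta * AA i j + 2 * UU i j)
                             (2 * delta * (p i - uu i) + 2 * uu i)).
    { apply isum_plus; apply isum_scal; [apply AA_row|apply UU_row]. }
    assert (Hdom : forall j, 0 <= cost i j <= (fun j => 2 * delta * AA i j + 2 * UU i j) j) by (intros j; split; auto).
    destruct (summable_dom (cost i) _ _ Hdom Hb) as [l Hl].
    rewrite (series_of _ _ Hl). split; auto. apply (isum_le (cost i) _ l _ (fun j => proj2 (Hdom j)) Hl Hb). }
  assert (Hb : infinite_sum (fun i => 2 * delta * (p i - uu i) + 2 * uu i)
                             (2 * delta * (1 - rr) + 2 * rr)).
  { apply isum_plus; apply isum_scal; [apply isum_minus; [apply p1|apply uu_sum]|apply uu_sum]. }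
  assert (Hs0 : forall i, 0 <= series (cost i)) by (intros; apply series_ge0; auto).
  assert (Hdom : forall i, 0 <= series (cost i) <= (fun i => 2 * delta * (p i - uu i) + 2 * uu i) i) by (intros i; split; [auto|apply Hrow]).
  destruct (summable_dom (fun i => series (cost i)) _ _ Hdom Hb) as [l Hl].
  change (/ 2 * series (fun i => series (cost i)) <= delta + rr). rewrite (series_of _ _ Hl).
  assert (l <= 2 * delta * (1 - rr) + 2 * rr) by (eapply isum_le; [|exact Hl|exact Hb]; intros; apply Hrow).
  generalize rr0 uu_sum; intros. assert (rr <= 1).
  { generalize (isum_le uu p rr 1 ltac:(intros; apply uu_bounds) uu_sum p1); auto. }
  nra.
Qed.

End Coupling.

Lemma sep_list (g : nat -> R) L e : (forall i, 0 <= g i) -> 0 < e ->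
  exists d, 0 < d <= e /\ forall i, (i < L)%nat -> g i = 0 \/ 2 * d <= g i.
Proof.
  intros Hg He. induction L.
  - exists e; split; [lra|intros; lia].
  - destruct IHL as [d [Hd H]].
    destruct (Req_dec (g L) 0) as [Hz|Hn].
    + exists d; split; auto. intros i Hi. destruct (Nat.eq_dec i L) as [->|]; auto. apply H; lia.
    + exists (Rmin d (g L / 2)). assert (0 < g L) by (specialize (Hg L); lra).
      split. split. apply Rmin_pos; lra. eapply Rle_trans; [apply Rmin_l|lra].
      intros i Hi. destruct (Nat.eq_dec i L) as [->|].
      * right. generalize (Rmin_r d (g L / 2)); lra.
      * destruct (H i ltac:(lia)) as [H1|H1]; [left; auto|right]. generalize (Rmin_l d (g L / 2)); lra.
Qed.

Lemma sep2 (F : nat -> nat -> R) K e : (forall i j, 0 <= F i j) -> 0 < e ->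
  exists d, 0 < d <= e /\ forall c c', (c < K)%nat -> (c' < K)%nat -> F c c' = 0 \/ 2 * d <= F c c'.
Proof.
  intros HF He. induction K.
  - exists e; split; [lra|intros; lia].
  - destruct IHK as [d1 [Hd1 H1]].
    destruct (sep_list (fun c' => F K c') (S K) d1 (fun i => HF K i) ltac:(lra)) as [d2 [Hd2 H2]].
    destruct (sep_list (fun c => F c K) K d2 (fun i => HF i K) ltac:(lra)) as [d3 [Hd3 H3]].
    exists d3; split; [lra|]. intros c c' Hc Hc'.
    destruct (Nat.eq_dec c K) as [->|Hn].
    + destruct (H2 c' Hc') as [E|E]; [left; auto|right; lra].
    + destruct (Nat.eq_dec c' K) as [->|Hn'].
      * destruct (H3 c ltac:(lia)) as [E|E]; [left; auto|right; lra].
      * destruct (H1 c c' ltac:(lia) ltac:(lia)) as [E|E]; [left; auto|right; lra].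
Qed.

Lemma finite_eventually (P : nat -> nat -> Prop) K :
  (forall c, (c < K)%nat -> exists N, forall n, (N <= n)%nat -> P c n) ->
  exists N, forall n, (N <= n)%nat -> forall c, (c < K)%nat -> P c n.
Proof.
  induction K; intros H.
  - exists 0%nat; intros; lia.
  - destruct IHK as [N1 HN1]. intros; apply H; lia.
    destruct (H K ltac:(lia)) as [N2 HN2].
    exists (N1 + N2)%nat. intros n Hn c Hc. destruct (Nat.eq_dec c K) as [->|].
    apply HN2; lia. apply HN1; lia.
Qed.

Lemma Rmax0_lip a b : Rabs (Rmax 0 a - Rmax 0 b) <= Rabs (a - b).
Proof.
  unfold Rmax. destruct (Rle_dec 0 a); destruct (Rle_dec 0 b);
  unfold Rabs; repeat destruct (Rcase_abs _); lra.
Qed.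

Section CB.
Variable dim : option nat.

Definition bump (z : Mat) (delta : R) (x : Mat) := Rmax 0 (1 - dd x z / delta).

Lemma dd_diff x y z : is_state dim x -> is_state dim y -> is_state dim z ->
  Rabs (dd x z - dd y z) <= dd x y.
Proof.
  intros Hx Hy Hz. apply Rabs_le. generalize (dd_tri dim x y z Hx Hy Hz) (dd_tri dim y x z Hy Hx Hz).
  rewrite (dd_sym dim y x); auto. intros; lra.
Qed.

Lemma bump_bounds z delta x : is_state dim x -> is_state dim z -> 0 < delta ->
  0 <= bump z delta x <= 1.
Proof.
  intros. unfold bump. generalize (dd_le2 dim x z H H0). intros.
  assert (0 <= dd x z / delta) by (apply Rmult_le_pos; [lra|apply Rlt_le, Rinv_0_lt_compat; auto]).
  split. apply Rmax_l. apply Rmax_lub; lra.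
Qed.

Lemma bump_bounded z delta : is_state dim z -> 0 < delta -> bounded_on_states dim (bump z delta).
Proof. intros. exists 1. intros x Hx. generalize (bump_bounds z delta x Hx H H0); intros.
  rewrite Rabs_right; lra. Qed.

Lemma bump_cont z delta : is_state dim z -> 0 < delta -> continuous_on_states dim (bump z delta).
Proof.
  intros Hz Hd x Hx eps He. exists (eps * delta). split. apply Rmult_lt_0_compat; auto.
  intros y Hy Hxy. unfold bump. eapply Rle_lt_trans; [apply Rmax0_lip|].
  replace (1 - dd x z / delta - (1 - dd y z / delta)) with ((dd y z - dd x z) / delta) by (field; lra).
  unfold Rdiv. rewrite Rabs_mult, (Rabs_right (/ delta)) by (apply Rle_ge, Rlt_le, Rinv_0_lt_compat; auto).
  apply (Rmult_lt_reg_r delta); auto. rewrite Rmult_assoc, Rinv_l, Rmult_1_r by lra.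
  eapply Rle_lt_trans. rewrite Rabs_minus_sym. apply (dd_diff x y z); auto. exact Hxy.
Qed.

Theorem c_to_b p rho q sigma :
  is_ensemble dim q sigma -> (forall n, is_ensemble dim (p n) (rho n)) ->
  weak_conv dim p rho q sigma -> Un_cv (fun n => DK (p n) (rho n) q sigma) 0.
Proof.
  intros Hq Hp Hw eps Heps.
  assert (Hq0 := Hq). destruct Hq0 as (Hq0 & Hq1 & Hqs).
  set (e := eps / 4). assert (He : 0 < e) by (unfold e; lra).
  destruct (isum_tail _ _ _ Hq1 He) as [K HK]. specialize (HK K (le_n K)).
  apply Rabs_def2 in HK.
  destruct (sep2 (fun c c' => dd (sigma c) (sigma c')) K e
             ltac:(intros; apply (dd_le2 dim); auto) He) as [delta [[Hd0 Hde] Hsep]].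
  set (e' := e / INR (S K)).
  assert (He' : 0 < e') by (unfold e'; apply Rdiv_lt_0_compat; [lra|apply lt_0_INR; lia]).
  assert (Hev : forall c, (c < K)%nat -> exists N, forall n, (N <= n)%nat ->
            cb q sigma K delta c - e' <= ca (p n) (rho n) sigma delta c).
  { intros c Hc.
    destruct (classic (exists j0, QB sigma K delta j0 c /\ forall c', (c' < c)%nat -> ~ QB sigma K delta j0 c'))
      as [[j0 [[Hj0K Hj0c] Hj0min]]|Hno].
    -
      assert (Hz0 : dd (sigma j0) (sigma c) = 0).
      { destruct (Hsep j0 c Hj0K Hc) as [E|E]; auto. lra. }
      assert (Hwk := Hw (bump (sigma c) delta) (bump_bounded _ _ (Hqs c) Hd0) (bump_cont _ _ (Hqs c) Hd0)).
      destruct (Hwk e' He') as [N HN]. exists N. intros n Hn. specialize (HN n Hn).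
      unfold R_dist in HN. apply Rabs_def2 in HN.
      destruct (integral_summable dim (p n) (rho n) (fun i => bump (sigma c) delta (rho n i)) 1 (Hp n))
        as [S1 HS1].
      { intros i. destruct (Hp n) as (_ & _ & Hs). generalize (bump_bounds (sigma c) delta _ (Hs i) (Hqs c) Hd0).
        intros; rewrite Rabs_right; lra. }
      destruct (integral_summable dim q sigma (fun j => bump (sigma c) delta (sigma j)) 1 Hq)
        as [S2 HS2].
      { intros j. generalize (bump_bounds (sigma c) delta _ (Hqs j) (Hqs c) Hd0).
        intros; rewrite Rabs_right; lra. }
      rewrite (series_of _ _ HS1), (series_of _ _ HS2) in HN.
      assert (Hb : cb q sigma K delta c <= S2).
      { apply (isum_le (fun j => cellB sigma K delta c j * q j) (fun j => q j * bump (sigma c) delta (sigma j))).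
        - intros j. unfold cellB.
          destruct (classic (QB sigma K delta j c /\ forall c', (c' < c)%nat -> ~ QB sigma K delta j c')) as [HB|HB].
          + rewrite ind_T by auto. destruct HB as [[HjK Hjc] _].
            assert (dd (sigma j) (sigma c) = 0).
            { destruct (Hsep j c HjK Hc) as [E|E]; auto. lra. }
            unfold bump. rewrite H. unfold Rdiv; rewrite Rmult_0_l, Rminus_0_r.
            rewrite Rmax_right by lra. lra.
          + rewrite ind_F by auto. generalize (bump_bounds (sigma c) delta _ (Hqs j) (Hqs c) Hd0) (Hq0 j).
            intros; nra.
        - apply (b_sum q sigma K delta).
        - exact HS2. }
      assert (Ha : S1 <= ca (p n) (rho n) sigma delta c).
      { apply (isum_le (fun i => p n i * bump (sigma c) delta (rho n i)) (fun i => cellA sigma delta c (rho n i) * p n i)).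
        - intros i. destruct (Hp n) as (Hpn0 & _ & Hs).
          generalize (bump_bounds (sigma c) delta _ (Hs i) (Hqs c) Hd0) (Hpn0 i). intros Hbb Hpi.
          destruct (Req_dec (bump (sigma c) delta (rho n i)) 0) as [Hb0|Hb0].
          { rewrite Hb0. generalize (ind_01 (QA sigma delta (rho n i) c /\ forall c', (c' < c)%nat -> ~ QA sigma delta (rho n i) c')).
            unfold cellA. intros; nra. }
          assert (HQA : QA sigma delta (rho n i) c).
          { unfold QA. unfold bump, Rmax in Hb0. destruct (Rle_dec 0 (1 - dd (rho n i) (sigma c) / delta)) as [Hl|Hl]; [|lra].
            assert (dd (rho n i) (sigma c) / delta < 1) by lra.
            apply (Rmult_lt_reg_r (/ delta)). apply Rinv_0_lt_compat; auto. rewrite Rinv_r by lra. exact H. }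
          assert (Hmin : forall c', (c' < c)%nat -> ~ QA sigma delta (rho n i) c').
          { intros c' Hc' Hq'. unfold QA in Hq', HQA.
            assert (Hn1 : ~ dd (sigma j0) (sigma c') < delta).
            { intros Hl. apply (Hj0min c' Hc'). split; auto. }
            assert (dd (sigma j0) (sigma c') <= dd (sigma j0) (sigma c) + dd (sigma c) (sigma c'))
              by (apply (dd_tri dim); auto).
            assert (dd (sigma c) (sigma c') <= dd (sigma c) (rho n i) + dd (rho n i) (sigma c'))
              by (apply (dd_tri dim); auto).
            rewrite (dd_sym dim (sigma c) (rho n i)) in H0 by auto.
            destruct (Hsep c c' Hc ltac:(lia)) as [E|E]; lra. }
          unfold cellA. rewrite ind_T by (split; auto). nra.
        - exact HS1.
        - apply (a_sum dim (p n) (rho n) sigma delta (Hp n)). }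
      lra.
    -
      exists 0%nat. intros n _.
      assert (cb q sigma K delta c = 0).
      { unfold cb. rewrite (fsum_ext _ _ (fun _ => 0)). apply fsum_zero.
        intros j _. unfold cellB. rewrite ind_F. ring. intros HB; apply Hno; exists j; exact HB. }
      rewrite H. generalize (ca0 dim (p n) (rho n) sigma delta (Hp n) c). lra. }
  destruct (finite_eventually _ K Hev) as [N HN].
  exists N. intros n Hn. unfold R_dist. rewrite Rminus_0_r.
  assert (HDK0 := DK_ge0 dim _ _ _ _ (Hp n) Hq).
  rewrite Rabs_right by lra.
  assert (HDK := coupling_bound dim (p n) (rho n) q sigma K delta (Hp n) Hq Hd0).
  assert (Hsumb : fsum K (fun c => cb q sigma K delta c) = fsum K q).
  { unfold cb. rewrite fsum_swap. apply fsum_ext. intros j Hj.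
    rewrite (fsum_ext _ _ (fun c => q j * cellB sigma K delta c j)) by (intros; ring).
    rewrite fsum_scal. unfold cellB. rewrite (ind_first (fun c => QB sigma K delta j c)).
    rewrite ind_T. ring. exists j. split; auto. split; auto. rewrite (dd_refl dim); auto. }
  assert (Hcm : fsum K (fun c => cb q sigma K delta c) - INR K * e' <= fsum K (cm (p n) (rho n) q sigma K delta)).
  { assert (forall K', (K' <= K)%nat -> fsum K' (fun c => cb q sigma K delta c) - INR K' * e' <= fsum K' (cm (p n) (rho n) q sigma K delta)).
    { induction K'; intros HK'. simpl; lra. rewrite S_INR. simpl.
      specialize (IHK' ltac:(lia)). specialize (HN n Hn K' ltac:(lia)).
      unfold cm. assert (Rmin (ca (p n) (rho n) sigma delta K') (cb q sigma K delta K') >= cb q sigma K delta K' - e').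
      { unfold Rmin. destruct (Rle_dec _ _); lra. }
      unfold cm in IHK'. lra. }
    apply H; lia. }
  assert (INR K * e' <= e).
  { assert (Hk := pos_INR K). unfold e'. rewrite S_INR.
    replace (INR K * (e / (INR K + 1))) with (e - e / (INR K + 1)) by (field; lra).
    assert (0 < e / (INR K + 1)) by (apply Rdiv_lt_0_compat; lra). lra. }
  unfold rr in HDK. unfold e in *. lra.
Qed.

End CB.

Theorem proposition4 (dim : option nat)
  (p : nat -> nat -> R) (rho : nat -> nat -> Mat)
  (p0 : nat -> R) (rho0 : nat -> Mat) :
  is_ensemble dim p0 rho0 ->
  (forall n, is_ensemble dim (p n) (rho n)) ->
  (Un_cv (fun n => Dstar dim (p n) (rho n) p0 rho0) 0 <->
   Un_cv (fun n => DK (p n) (rho n) p0 rho0) 0) /\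
  (Un_cv (fun n => DK (p n) (rho n) p0 rho0) 0 <->
   weak_conv dim p rho p0 rho0).
Proof.
  intros H0 Hn.
  assert (BA : Un_cv (fun n => DK (p n) (rho n) p0 rho0) 0 ->
               Un_cv (fun n => Dstar dim (p n) (rho n) p0 rho0) 0).
  { intros HB e He. destruct (HB e He) as [N HN]. exists N. intros n Hnn.
    specialize (HN n Hnn). unfold R_dist in *. rewrite Rminus_0_r in *.
    generalize (Dstar_ge0 dim _ _ _ _ (Hn n) H0) (Dstar_le_DK dim _ _ _ _ (Hn n) H0)
               (DK_ge0 dim _ _ _ _ (Hn n) H0). intros.
    rewrite Rabs_right in * by lra. lra. }
  split; split.
  - intros HA. apply (c_to_b dim); auto. apply (a_to_c dim); auto.
  - exact BA.
  - intros HB. apply (a_to_c dim); auto.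
  - intros HC. apply (c_to_b dim); auto.
Qed.
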